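(* For any $c\neq0$, the $\mu$HS equation has a one-parameter family of smooth periodic traveling waves of period one and a one-parameter family of cusped periodic traveling waves of period one moving with speed $c$. That is, there are one-parameter families of $1$-periodic $\varphi\in H^1_{loc}(\mathbb{R})$ (smooth in the first family; smooth except for cusps at the points where $\varphi=c$ in the second) such that, with $\mu:=\int_0^1\varphi\,dx$, for some $a\in\mathbb{R}$, $$\varphi_x^2=-4\mu\varphi+\big((\varphi-c)^2\big)_{xx}+a\quad\text{in }\mathcal{D}'(\mathbb{R}),$$ so that $u(t,x)=\varphi(x-ct)$ is a traveling wave of $-u_{txx}=-2\mu(u)u_x+2u_xu_{xx}+uu_{xxx}$ on $S^1=\mathbb{R}/\mathbb{Z}$.
   Context: $\mu(u)=\int_{S^1}u\,dx$ for $u$ on $S^1=\mathbb{R}/\mathbb{Z}$. A traveling wave of speed $c$ is a solution of the form $u(t,x)=\varphi(x-ct)$, understood weakly via the displayed distributional equation. *)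

(* Defs.v *)
From Stdlib Require Import Reals Lra List.
Import ListNotations.
Open Scope R_scope.

(* ---------- Henstock–Kurzweil (gauge) integral on [a,b] ----------
   Used so that unbounded integrands such as phi_x^2 near a cusp can be
   integrated; for nonnegative (and for Lebesgue integrable) functions it
   agrees with the Lebesgue integral. *)

(* A tagged division of [a,b]: list of (tag t, right endpoint x); the left
   endpoint of each piece is the previous right endpoint (initially a). *)
Fixpoint fine_tdiv (delta : R -> R) (a b : R) (P : list (R * R)) : Prop :=
  match P with
  | [] => a = b
  | (t, x) :: P' =>
      a < x /\ a <= t <= x /\ t - delta t < a /\ x < t + delta t
      /\ fine_tdiv delta x b P'
  end.

Fixpoint rsum (f : R -> R) (a : R) (P : list (R * R)) : R :=
  match P with
  | [] => 0
  | (t, x) :: P' => f t * (x - a) + rsum f x P'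
  end.

Definition HK_integral (f : R -> R) (a b I : R) : Prop :=
  a <= b /\
  forall eps, 0 < eps ->
    exists delta : R -> R, (forall x, 0 < delta x) /\
      forall P, fine_tdiv delta a b P -> Rabs (rsum f a P - I) < eps.

Definition smooth (f : R -> R) : Prop :=
  exists D : nat -> R -> R, D 0%nat = f /\
    forall n x, derivable_pt_lim (D n) x (D (S n) x).

Definition smooth_off (phi : R -> R) (c : R) : Prop :=
  exists D : nat -> R -> R, D 0%nat = phi /\
    forall n x, phi x <> c -> derivable_pt_lim (D n) x (D (S n) x).

(* ---------- H^1_loc with weak derivative g ----------
   phi is the indefinite (HK) integral of g on every bounded interval and
   g^2 is integrable on every bounded interval (g in L^2_loc). *)
Definition H1loc_with (phi g : R -> R) : Prop :=
  (forall x y, x <= y -> HK_integral g x y (phi y - phi x)) /\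
  (forall x y, x <= y -> exists I, HK_integral (fun z => (g z) ^ 2) x y I).

(* ---------- the weak (distributional) equation ----------
   phi_x^2 = -4 mu phi + ((phi - c)^2)_xx + a  in D'(R), tested against
   smooth psi = D 0 supported in [-M, M]. *)
Definition weak_eq (phi g : R -> R) (mu a c : R) : Prop :=
  forall (D : nat -> R -> R) (M : R),
    0 < M ->
    (forall n x, derivable_pt_lim (D n) x (D (S n) x)) ->
    (forall x, M <= Rabs x -> D 0%nat x = 0) ->
    exists I,
      HK_integral (fun x => (g x) ^ 2 * D 0%nat x) (- M) M I /\
      HK_integral (fun x => (-4 * mu * phi x + a) * D 0%nat x
                            + (phi x - c) ^ 2 * D 2%nat x) (- M) M I.

Definition traveling_wave (c : R) (phi : R -> R) : Prop :=
  (forall x, phi (x + 1) = phi x) /\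
  exists (g : R -> R) (mu a : R),
    H1loc_with phi g /\ HK_integral phi 0 1 mu /\ weak_eq phi g mu a c.

Definition deriv_to_pinf_left (phi : R -> R) (x0 : R) : Prop :=
  forall K, exists eta, 0 < eta /\
    forall x l, x0 - eta < x < x0 -> derivable_pt_lim phi x l -> K < l.
Definition deriv_to_ninf_left (phi : R -> R) (x0 : R) : Prop :=
  forall K, exists eta, 0 < eta /\
    forall x l, x0 - eta < x < x0 -> derivable_pt_lim phi x l -> l < K.
Definition deriv_to_pinf_right (phi : R -> R) (x0 : R) : Prop :=
  forall K, exists eta, 0 < eta /\
    forall x l, x0 < x < x0 + eta -> derivable_pt_lim phi x l -> K < l.
Definition deriv_to_ninf_right (phi : R -> R) (x0 : R) : Prop :=
  forall K, exists eta, 0 < eta /\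
    forall x l, x0 < x < x0 + eta -> derivable_pt_lim phi x l -> l < K.

Definition cusp_at (phi : R -> R) (x0 : R) : Prop :=
  exists r, 0 < r /\
    (forall x, 0 < Rabs (x - x0) < r -> exists l, derivable_pt_lim phi x l) /\
    ((deriv_to_pinf_left phi x0 /\ deriv_to_ninf_right phi x0) \/
     (deriv_to_ninf_left phi x0 /\ deriv_to_pinf_right phi x0)).

Definition smooth_wave (c : R) (phi : R -> R) : Prop :=
  traveling_wave c phi /\ smooth phi /\ (exists x y, phi x <> phi y).

Definition cusped_wave (c : R) (phi : R -> R) : Prop :=
  traveling_wave c phi /\ smooth_off phi c /\ (exists x, phi x = c) /\
  (forall x, phi x = c -> cusp_at phi x).

Definition translates (f h : R -> R) : Prop :=
  exists tau, forall x, f x = h (x + tau).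

Definition one_param_family (W : (R -> R) -> Prop) : Prop :=
  exists (p q : R) (Phi : R -> R -> R), p < q /\
    (forall s, p < s < q -> W (Phi s)) /\
    (forall s s', p < s < q -> p < s' < q -> s <> s' ->
        ~ translates (Phi s) (Phi s')).

(* Main.v *)
Require Import Defs.
From Stdlib Require Import Reals Lra Lia List ClassicalEpsilon ZArith.
Import ListNotations.
Open Scope R_scope.

Definition isint (t : R) : Prop := exists k : Z, t = IZR k.

Lemma IZR_lt_plus1 : forall m n : Z, IZR m < IZR n -> IZR m + 1 <= IZR n.
Proof.
  intros m n H. apply lt_IZR in H. rewrite <- plus_IZR. apply IZR_le. lia.
Qed.

Lemma up_mono : forall x y, x <= y -> IZR (up x) <= IZR (up y).
Proof.
  intros x y Hxy. destruct (archimed x) as [H1 H2]. destruct (archimed y) as [H3 H4].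
  destruct (Rle_lt_dec (IZR (up x)) (IZR (up y))) as [h|h]; auto.
  apply IZR_lt_plus1 in h. lra.
Qed.

Lemma up_isint : forall t, isint t -> IZR (up t) = t + 1.
Proof.
  intros t [k ->]. rewrite <- (tech_up (IZR k) (k+1)); rewrite plus_IZR; lra.
Qed.

Lemma isint_up : forall t, IZR (up t) = t + 1 -> isint t.
Proof.
  intros t H. exists (up t - 1)%Z. rewrite minus_IZR. lra.
Qed.

Definition ind (l : R) : R :=
  if Req_EM_T (IZR (up l) - l) 1 then 1 else 0.

Definition Phi (b l : R) : R := 2 * (IZR (up b) - IZR (up l)) + ind l.

Lemma ind_bounds : forall l, 0 <= ind l <= 1.
Proof. intros; unfold ind; destruct Req_EM_T; lra. Qed.

Lemma ind_int : forall l, isint l -> ind l = 1.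
Proof. intros l H. unfold ind. destruct Req_EM_T as [|n]; auto. apply up_isint in H. lra. Qed.

Lemma Phi_cusp : forall b l t x, l <= t <= x -> l < x -> isint t ->
  Phi b x + 1 <= Phi b l.
Proof.
  intros b l t x [H1 H2] H3 Ht. unfold Phi.
  pose proof (ind_bounds x). pose proof (ind_bounds l).
  destruct (Req_dec t l) as [E|E].
  - subst t. rewrite (ind_int l Ht).
    destruct (Req_EM_T (IZR (up x) - x) 1) as [e|e].
    + assert (Hx : isint x) by (apply isint_up; lra).
      rewrite (up_isint x Hx), (up_isint l Ht).
      destruct Ht as [k ->]. destruct Hx as [m ->].
      apply IZR_lt_plus1 in H3. unfold ind. destruct Req_EM_T; lra.
    + unfold ind at 1. destruct Req_EM_T as [|_]; [contradiction|].
      pose proof (up_mono l x H2). lra.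
  - assert (l < t) by lra.
    destruct (archimed x) as [A1 A2]. destruct (archimed l) as [B1 B2].
    destruct Ht as [k ->].
    assert (IZR k < IZR (up x) \/ IZR k = IZR (up x)) as [C|C] by lra.
    + apply IZR_lt_plus1 in C.
      assert (IZR (up l) < IZR k + 1) by lra.
      assert (IZR (up l) <= IZR k).
      { destruct (Rle_lt_dec (IZR (up l)) (IZR k)) as [h|h]; auto.
        apply IZR_lt_plus1 in h. lra. }
      lra.
    + lra.
Qed.

Lemma Phi_noint : forall b l x n, IZR n - 1 < l -> l <= x -> x < IZR n ->
  Phi b x = Phi b l.
Proof.
  intros b l x n H1 H2 H3. unfold Phi.
  assert (E1 : up l = n) by (symmetry; apply tech_up; lra).
  assert (E2 : up x = n) by (symmetry; apply tech_up; lra).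
  unfold ind. rewrite E1, E2.
  destruct Req_EM_T; destruct Req_EM_T; lra.
Qed.

Lemma Phi_nonneg : forall b l, l <= b -> 0 <= Phi b l.
Proof.
  intros. unfold Phi. pose proof (up_mono l b H). pose proof (ind_bounds l). lra.
Qed.

Lemma fine_le : forall d P a b, fine_tdiv d a b P -> a <= b.
Proof.
  intros d P. induction P as [|[t x] P IH]; simpl; intros a b H.
  - lra.
  - destruct H as (H1 & H2 & H3 & H4 & H5). apply IH in H5. lra.
Qed.

Lemma sum_err : forall (F f d : R -> R) (eta beta a b : R),
  0 <= eta -> 0 <= beta ->
  (forall l t x, a <= l -> l <= t <= x -> l < x -> x <= b -> t - d t < l -> x < t + d t ->
     (isint t -> Rabs (f t * (x - l) - (F x - F l)) <= beta) /\
     (~ isint t -> Rabs (f t * (x - l) - (F x - F l)) <= eta * (x - l)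
                   /\ Phi b x = Phi b l)) ->
  forall P l, a <= l -> fine_tdiv d l b P ->
    Rabs (rsum f l P - (F b - F l)) <= eta * (b - l) + beta * Phi b l.
Proof.
  intros F f d eta beta a b He Hb Hpiece P.
  induction P as [|[t x] P IH]; simpl; intros l Hal H.
  - subst l. replace (0 - (F b - F b)) with 0 by ring. rewrite Rabs_R0.
    pose proof (ind_bounds b). unfold Phi. replace (IZR (up b) - IZR (up b)) with 0 by ring.
    apply Rplus_le_le_0_compat; [lra| apply Rmult_le_pos; lra].
  - destruct H as (H1 & H2 & H3 & H4 & H5).
    pose proof (fine_le _ _ _ _ H5) as Hxb.
    specialize (IH x ltac:(lra) H5).
    destruct (Hpiece l t x Hal H2 H1 Hxb H3 H4) as [Hc Hn].
    replace (f t * (x - l) + rsum f x P - (F b - F l))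
      with ((f t * (x - l) - (F x - F l)) + (rsum f x P - (F b - F x))) by ring.
    eapply Rle_trans; [apply Rabs_triang|].
    destruct (classic (isint t)) as [It|It].
    + specialize (Hc It). pose proof (Phi_cusp b l t x H2 H1 It).
      assert (beta * (Phi b x + 1) <= beta * Phi b l) by (apply Rmult_le_compat_l; lra).
      assert (eta * (b - x) <= eta * (b - l)) by (apply Rmult_le_compat_l; lra).
      lra.
    + destruct (Hn It) as [Hn1 Hn2]. rewrite Hn2 in IH. nra.
Qed.

Lemma cont_pt_eps : forall F t, continuity_pt F t -> forall e, 0 < e ->
  exists d, 0 < d /\ forall y, Rabs (y - t) < d -> Rabs (F y - F t) < e.
Proof.
  intros F t H e He.
  unfold continuity_pt, continue_in, limit1_in, limit_in in H.
  destruct (H e He) as [d [Hd Hy]]. exists d; split; auto.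
  intros y Hyt. destruct (Req_dec y t) as [->|Hne].
  - replace (F t - F t) with 0 by ring. rewrite Rabs_R0; auto.
  - apply (Hy y). unfold D_x, no_cond. simpl. unfold R_dist. split; [split; auto|auto].
Qed.

Lemma deriv_straddle : forall F t l, derivable_pt_lim F t l -> forall e, 0 < e ->
  exists d, 0 < d /\ forall y, Rabs (y - t) < d ->
    Rabs (F y - F t - l * (y - t)) <= e * Rabs (y - t).
Proof.
  intros F t l H e He. destruct (H e He) as [[d Hd] Hy]. exists d; split; auto.
  intros y Hyt. destruct (Req_dec y t) as [->|Hne].
  - replace (F t - F t - l * (t - t)) with 0 by ring. rewrite Rabs_R0.
    replace (t - t) with 0 by ring. rewrite Rabs_R0. lra.
  - assert (Hh : y - t <> 0) by lra.
    specialize (Hy (y - t) Hh Hyt). replace (t + (y - t)) with y in Hy by ring.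
    replace (F y - F t - l * (y - t)) with (((F y - F t)/(y-t) - l) * (y - t))
      by (field; auto).
    rewrite Rabs_mult. apply Rmult_le_compat_r; [apply Rabs_pos| lra].
Qed.

Lemma HK_FTC : forall (F f : R -> R) a b, a <= b ->
  (forall t, a <= t <= b -> continuity_pt F t) ->
  (forall t, a <= t <= b -> ~ isint t -> derivable_pt_lim F t (f t)) ->
  HK_integral f a b (F b - F a).
Proof.
  intros F f a b Hab Hc Hd. split; auto. intros eps Heps.
  pose proof (Phi_nonneg b a Hab) as HPhi.
  set (eta := eps / (2 * (b - a + 1))).
  set (beta := eps / (2 * (Phi b a + 1))).
  assert (Heta : 0 < eta) by (unfold eta; apply Rdiv_lt_0_compat; lra).
  assert (Hbeta : 0 < beta) by (unfold beta; apply Rdiv_lt_0_compat; lra).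
  assert (Hg : forall t, exists d, 0 < d /\
     (a <= t <= b -> isint t -> (forall y, Rabs (y - t) < d -> Rabs (F y - F t) < beta/3)
                         /\ 2 * d * Rabs (f t) <= beta / 3) /\
     (a <= t <= b -> ~ isint t ->
        (forall y, Rabs (y - t) < d -> Rabs (F y - F t - f t * (y - t)) <= eta * Rabs (y - t))
        /\ d <= t - (IZR (up t) - 1) /\ d <= IZR (up t) - t)).
  { intro t. destruct (Rle_dec a t) as [h1|h1]; [destruct (Rle_dec t b) as [h2|h2]|].
    2,3: exists 1; split; [lra| split; intros; lra].
    destruct (classic (isint t)) as [It|It].
    - destruct (cont_pt_eps F t (Hc t (conj h1 h2)) (beta/3) ltac:(lra)) as [d1 [Hd1 H1]].
      set (d := Rmin d1 (beta / (6 * (Rabs (f t) + 1)))).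
      assert (0 < beta / (6 * (Rabs (f t) + 1))).
      { apply Rdiv_lt_0_compat; [lra|]. pose proof (Rabs_pos (f t)); lra. }
      assert (Hdpos : 0 < d) by (unfold d; apply Rmin_glb_lt; lra).
      exists d; split; auto. split; [|intros _ Hn; contradiction].
      intros _ _. split.
      + intros y Hy. apply H1. unfold d in Hy. pose proof (Rmin_l d1 (beta / (6 * (Rabs (f t) + 1)))). lra.
      + pose proof (Rmin_r d1 (beta / (6 * (Rabs (f t) + 1)))). fold d in H0.
        pose proof (Rabs_pos (f t)).
        assert (d * (6 * (Rabs (f t) + 1)) <= beta).
        { apply (Rmult_le_compat_r (6 * (Rabs (f t) + 1))) in H0; [|lra].
          unfold Rdiv in H0. rewrite Rmult_assoc, Rinv_l in H0; lra. }
        nra.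
    - destruct (deriv_straddle F t (f t) (Hd t (conj h1 h2) It) eta Heta) as [d1 [Hd1 H1]].
      destruct (archimed t) as [A1 A2].
      assert (IZR (up t) - 1 < t).
      { destruct (Req_dec (IZR (up t) - 1) t) as [E|E]; [|lra].
        exfalso; apply It. exists (up t - 1)%Z. rewrite minus_IZR. lra. }
      set (d := Rmin d1 (Rmin (t - (IZR (up t) - 1)) (IZR (up t) - t))).
      assert (Hdpos : 0 < d) by (unfold d; repeat apply Rmin_glb_lt; lra).
      exists d; split; auto. split; [intros _ Hn; contradiction|].
      intros _ _. unfold d. split; [|split].
      + intros y Hy. apply H1. pose proof (Rmin_l d1 (Rmin (t - (IZR (up t) - 1)) (IZR (up t) - t))). lra.
      + eapply Rle_trans; [apply Rmin_r| apply Rmin_l].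
      + eapply Rle_trans; [apply Rmin_r| apply Rmin_r]. }
  exists (fun t => proj1_sig (constructive_indefinite_description _ (Hg t))).
  split.
  { intro t. exact (proj1 (proj2_sig (constructive_indefinite_description _ (Hg t)))). }
  intros P HP.
  assert (Hsum := sum_err F f (fun t => proj1_sig (constructive_indefinite_description _ (Hg t)))
                  eta beta a b ltac:(lra) ltac:(lra)).
  assert (Hbound : Rabs (rsum f a P - (F b - F a)) <= eta * (b - a) + beta * Phi b a).
  { apply Hsum; [|lra|exact HP].
    intros l t x Hal [Hlt Htx] Hlx Hxb Hl Hx.
    pose proof (proj2_sig (constructive_indefinite_description _ (Hg t))) as [Hd0 [Hi Hn]].
    set (d := proj1_sig (constructive_indefinite_description _ (Hg t))) in *.
    assert (Ht : a <= t <= b) by lra.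
    split.
    - intro It. destruct (Hi Ht It) as [Hi1 Hi2].
      assert (E1 := Hi1 x ltac:(apply Rabs_def1; lra)).
      assert (E2 := Hi1 l ltac:(apply Rabs_def1; lra)).
      replace (f t * (x - l) - (F x - F l)) with (f t * (x - l) - (F x - F t) + (F l - F t)) by ring.
      eapply Rle_trans; [apply Rabs_triang|].
      eapply Rle_trans; [apply Rplus_le_compat_r; apply Rabs_triang|].
      rewrite Rabs_Ropp, Rabs_mult. rewrite (Rabs_right (x - l)) by lra.
      pose proof (Rabs_pos (f t)).
      assert (Rabs (f t) * (x - l) <= 2 * d * Rabs (f t)) by nra. lra.
    - intro It. destruct (Hn Ht It) as [Hn1 [Hn2 Hn3]].
      assert (E1 := Hn1 x ltac:(apply Rabs_def1; lra)).
      assert (E2 := Hn1 l ltac:(apply Rabs_def1; lra)).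
      split.
      + replace (f t * (x - l) - (F x - F l))
          with (- (F x - F t - f t * (x - t)) + (F l - F t - f t * (l - t))) by ring.
        eapply Rle_trans; [apply Rabs_triang|]. rewrite Rabs_Ropp.
        rewrite (Rabs_right (x - t)) in E1 by lra.
        rewrite (Rabs_left1 (l - t)) in E2 by lra. lra.
      + apply (Phi_noint b l x (up t)); lra. }
  eapply Rle_lt_trans; [exact Hbound|].
  assert (eta * (b - a) < eps / 2).
  { unfold eta. apply (Rmult_lt_reg_r (2 * (b - a + 1))); [lra|].
    unfold Rdiv. field_simplify; [lra| lra]. }
  assert (beta * Phi b a < eps / 2).
  { unfold beta. apply (Rmult_lt_reg_r (2 * (Phi b a + 1))); [lra|].
    unfold Rdiv. field_simplify; [nra| lra]. }
  lra.
Qed.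

Lemma prim_local : forall f a b, (forall x, continuity_pt f x) ->
  exists F, forall x, a < x < b -> derivable_pt_lim F x (f x).
Proof.
  intros f a b Hc. destruct (Rle_dec a b) as [h|h].
  - exists (primitive h (FTC_P1 h (fun x _ => Hc x))).
    intros x Hx. apply RiemannInt_P27; auto.
  - exists (fun _ => 0). intros; lra.
Qed.

Lemma deriv_local_eq : forall g h x l r, 0 < r ->
  (forall y, Rabs (y - x) < r -> g y = h y) ->
  derivable_pt_lim h x l -> derivable_pt_lim g x l.
Proof.
  intros g h x l r Hr Heq Hd e He. destruct (Hd e He) as [[d Hd0] Hdd].
  assert (Hm : 0 < Rmin d r) by (apply Rmin_glb_lt; lra).
  exists (mkposreal _ Hm). intros k Hk Hk2. simpl in Hk2.
  rewrite (Heq (x + k)), (Heq x).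
  - apply Hdd; auto. simpl. pose proof (Rmin_l d r). lra.
  - replace (x - x) with 0 by ring. rewrite Rabs_R0; lra.
  - replace (x + k - x) with k by ring. pose proof (Rmin_r d r). lra.
Qed.

Lemma deriv_zero_const : forall F a b, a <= b ->
  (forall x, a <= x <= b -> derivable_pt_lim F x 0) -> F b = F a.
Proof.
  intros F a b Hab H. destruct (Req_dec a b) as [->|Hne]; auto.
  destruct (MVT_cor2 F (fun _ => 0) a b ltac:(lra) H) as [c [Hc _]]. lra.
Qed.

Lemma prim_global : forall f, (forall x, continuity_pt f x) ->
  exists F, forall x, derivable_pt_lim F x (f x).
Proof.
  intros f Hc.
  assert (Hn : forall n : nat, exists Fn, forall x, - (INR n + 1) < x < INR n + 1 ->
             derivable_pt_lim Fn x (f x)).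
  { intro n. apply prim_local; auto. }
  set (Fn := fun n => proj1_sig (constructive_indefinite_description _ (Hn n))).
  assert (HFn : forall n x, - (INR n + 1) < x < INR n + 1 -> derivable_pt_lim (Fn n) x (f x)).
  { intro n. exact (proj2_sig (constructive_indefinite_description _ (Hn n))). }
  assert (Hagree : forall n m y, Rabs y < INR n + 1 -> Rabs y < INR m + 1 ->
            Fn n y - Fn n 0 = Fn m y - Fn m 0).
  { intros n m y H1 H2.
    assert (Hd : forall z, Rabs z < INR n + 1 -> Rabs z < INR m + 1 ->
                 derivable_pt_lim (fun z => Fn n z - Fn m z) z 0).
    { intros z Z1 Z2. replace 0 with (f z - f z) by ring.
      apply derivable_pt_lim_minus; apply HFn;
      [destruct (Rabs_def2 _ _ Z1)|destruct (Rabs_def2 _ _ Z2)]; lra. }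
    pose proof (pos_INR n). pose proof (pos_INR m).
    destruct (Rle_dec 0 y).
    - assert (E := deriv_zero_const (fun z => Fn n z - Fn m z) 0 y r).
      simpl in E. enough (Fn n y - Fn m y = Fn n 0 - Fn m 0) by lra. apply E.
      intros x Hx. apply Hd; rewrite Rabs_right; try lra;
      rewrite Rabs_right in H1, H2; lra.
    - assert (E := deriv_zero_const (fun z => Fn n z - Fn m z) y 0 ltac:(lra)).
      simpl in E. enough (Fn n 0 - Fn m 0 = Fn n y - Fn m y) by lra. apply E.
      intros x Hx. rewrite Rabs_left1 in H1, H2 by lra.
      apply Hd; rewrite Rabs_left1; lra. }
  set (N := fun y => Z.to_nat (up (Rabs y))).
  assert (HN : forall y, Rabs y < INR (N y) + 1).
  { intro y. unfold N. destruct (archimed (Rabs y)) as [A1 A2].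
    pose proof (Rabs_pos y).
    assert (0 <= up (Rabs y))%Z by (apply le_IZR; lra).
    rewrite INR_IZR_INZ, Z2Nat.id by auto. lra. }
  exists (fun y => Fn (N y) y - Fn (N y) 0).
  intro x. set (m := N (Rabs x + 1)).
  assert (Hm : Rabs (Rabs x + 1) < INR m + 1) by apply HN.
  rewrite Rabs_right in Hm by (pose proof (Rabs_pos x); lra).
  apply (deriv_local_eq _ (fun y => Fn m y - Fn m 0) x (f x) 1 ltac:(lra)).
  - intros y Hy. apply Hagree; auto.
    pose proof (Rabs_triang_inv y x). lra.
  - replace (f x) with (f x - 0) by ring. apply derivable_pt_lim_minus.
    + apply HFn. destruct (Rabs_def2 x (INR m + 1)); [pose proof (Rabs_pos x); lra|lra].
    + apply derivable_pt_lim_const.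
Qed.

Lemma dl_plus : forall f g x a b, derivable_pt_lim f x a -> derivable_pt_lim g x b ->
  derivable_pt_lim (fun y => f y + g y) x (a + b).
Proof. intros. exact (derivable_pt_lim_plus f g x a b H H0). Qed.
Lemma dl_minus : forall f g x a b, derivable_pt_lim f x a -> derivable_pt_lim g x b ->
  derivable_pt_lim (fun y => f y - g y) x (a - b).
Proof. intros. exact (derivable_pt_lim_minus f g x a b H H0). Qed.
Lemma dl_mult : forall f g x a b, derivable_pt_lim f x a -> derivable_pt_lim g x b ->
  derivable_pt_lim (fun y => f y * g y) x (a * g x + f x * b).
Proof. intros. exact (derivable_pt_lim_mult f g x a b H H0). Qed.
Lemma dl_const : forall c x, derivable_pt_lim (fun _ => c) x 0.
Proof. intros. exact (derivable_pt_lim_const c x). Qed.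
Lemma dl_id : forall x, derivable_pt_lim (fun y => y) x 1.
Proof. intros. exact (derivable_pt_lim_id x). Qed.
Lemma dl_comp : forall f g x a b, derivable_pt_lim f x a -> derivable_pt_lim g (f x) b ->
  derivable_pt_lim (fun y => g (f y)) x (b * a).
Proof. intros. exact (derivable_pt_lim_comp f g x a b H H0). Qed.
Lemma dl_inv : forall f x a, f x <> 0 -> derivable_pt_lim f x a ->
  derivable_pt_lim (fun y => / f y) x (- a / (f x)^2).
Proof.
  intros f x a Hn H. pose (pr := exist (fun l => derivable_pt_lim f x l) a H : derivable_pt f x).
  apply (derive_pt_eq_1 _ _ _ (derivable_pt_inv f x Hn pr)).
  rewrite derive_pt_inv. unfold Rsqr. simpl. field. auto.
Qed.
Lemma dl_sqrt : forall f x a, 0 < f x -> derivable_pt_lim f x a ->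
  derivable_pt_lim (fun y => sqrt (f y)) x (a / (2 * sqrt (f x))).
Proof.
  intros f x a Hp H. replace (a / (2 * sqrt (f x))) with (/ (2 * sqrt (f x)) * a) by (unfold Rdiv; ring).
  apply (dl_comp f sqrt x a); auto. apply derivable_pt_lim_sqrt; auto.
Qed.
Lemma dl_ext : forall f g x a b, (forall y, f y = g y) -> a = b ->
  derivable_pt_lim g x b -> derivable_pt_lim f x a.
Proof.
  intros f g x a b E Eab H. subst b. apply (derivable_pt_lim_ext g f); auto.
Qed.
Lemma dl_unique : forall f x a b, derivable_pt_lim f x a -> derivable_pt_lim f x b -> a = b.
Proof. intros. eapply uniqueness_limite; eauto. Qed.
Lemma dl_cont : forall f x a, derivable_pt_lim f x a -> continuity_pt f x.
Proof. intros f x a H. apply derivable_continuous_pt. exists a. exact H. Qed.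

Inductive ex : Type :=
 | EC (r : R) | ECos | ESin | EV | EIV | EIP | EAdd (e1 e2 : ex) | EMul (e1 e2 : ex).

Definition Pf (al be : R) (t : R) : R := al - be * cos t.

Fixpoint ev (al be s : R) (e : ex) (t : R) : R :=
  match e with
  | EC r => r
  | ECos => cos t
  | ESin => sin t
  | EV => sqrt (Pf al be t + s)
  | EIV => / sqrt (Pf al be t + s)
  | EIP => / Pf al be t
  | EAdd e1 e2 => ev al be s e1 t + ev al be s e2 t
  | EMul e1 e2 => ev al be s e1 t * ev al be s e2 t
  end.

Fixpoint dex (be : R) (e : ex) : ex :=
  match e with
  | EC _ => EC 0
  | ECos => EMul (EC (-1)) ESin
  | ESin => ECos
  | EV => EMul (EC (be/2)) (EMul ESin EIV)
  | EIV => EMul (EC (-(be/2))) (EMul ESin (EMul EIV (EMul EIV EIV)))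
  | EIP => EMul (EC (-be)) (EMul ESin (EMul EIP EIP))
  | EAdd e1 e2 => EAdd (dex be e1) (dex be e2)
  | EMul e1 e2 => EAdd (EMul (dex be e1) e2) (EMul e1 (dex be e2))
  end.

Fixpoint noIP (e : ex) : Prop :=
  match e with
  | EIP => False
  | EAdd e1 e2 | EMul e1 e2 => noIP e1 /\ noIP e2
  | _ => True
  end.

Lemma dex_noIP : forall be e, noIP e -> noIP (dex be e).
Proof. intros be e; induction e; simpl; tauto. Qed.

Lemma dl_P : forall al be t, derivable_pt_lim (Pf al be) t (be * sin t).
Proof.
  intros. unfold Pf. apply (dl_ext _ (fun y => al - be * cos y) _ _ (0 - (0 * cos t + be * - sin t))).
  - reflexivity.
  - ring.
  - apply dl_minus; [apply dl_const|]. apply dl_mult; [apply dl_const|apply derivable_pt_lim_cos].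
Qed.

Lemma dl_V : forall al be s t, 0 < Pf al be t + s ->
  derivable_pt_lim (fun y => sqrt (Pf al be y + s)) t
     (be * sin t / (2 * sqrt (Pf al be t + s))).
Proof.
  intros. apply (dl_sqrt (fun y => Pf al be y + s)); auto.
  apply (dl_ext _ (fun y => Pf al be y + s) _ _ (be * sin t + 0)); auto; [ring|].
  apply dl_plus; [apply dl_P|apply dl_const].
Qed.

Lemma ev_deriv : forall al be s e t,
  0 < Pf al be t + s -> (noIP e \/ Pf al be t <> 0) ->
  derivable_pt_lim (ev al be s e) t (ev al be s (dex be e) t).
Proof.
  intros al be s e t Hps Hok.
  assert (Hsq : 0 < sqrt (Pf al be t + s)) by (apply sqrt_lt_R0; auto).
  induction e; simpl in *.
  - apply dl_const.
  - apply (dl_ext _ cos _ _ (- sin t)); auto; [ring| apply derivable_pt_lim_cos].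
  - apply derivable_pt_lim_sin.
  - eapply dl_ext; [reflexivity| |]; [|apply dl_V; auto]. field. lra.
  - eapply dl_ext; [reflexivity| |]; [|apply dl_inv; [lra|apply dl_V; auto]].
    cbv beta. field. lra.
  - destruct Hok as [[]|Hn]. eapply dl_ext; [reflexivity| |]; [|apply dl_inv; [auto|apply dl_P]].
    unfold Pf in *; field; auto.
  - apply dl_plus; [apply IHe1|apply IHe2]; tauto.
  - apply dl_mult; [apply IHe1|apply IHe2]; tauto.
Qed.

Record prm := mkprm { pal : R; pbe : R; ps : R;
  p_be : 0 < pbe; p_le : pbe <= pal; p_s : 0 <= ps;
  p_case : ps = 0 \/ pal = pbe; p_pos : 0 < pal - pbe + ps }.

Definition eP (p : prm) : ex := EAdd (EC (pal p)) (EMul (EC (- pbe p)) ECos).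
Definition ew (p : prm) : ex := EMul (eP p) EIV.
Definition einvw : ex := EMul EV EIP.
Definition evp (p : prm) (e : ex) (t : R) : R := ev (pal p) (pbe p) (ps p) e t.
Definition PP (p : prm) (t : R) : R := Pf (pal p) (pbe p) t.

Lemma evp_eP : forall p t, evp p (eP p) t = PP p t.
Proof. intros. unfold evp, eP, PP, Pf. simpl. ring. Qed.

Lemma PP_bounds : forall p t, pal p - pbe p <= PP p t <= pal p + pbe p.
Proof.
  intros. unfold PP, Pf. pose proof (COS_bound t). pose proof (p_be p). nra.
Qed.

Lemma PP_nonneg : forall p t, 0 <= PP p t.
Proof. intros. pose proof (PP_bounds p t). pose proof (p_le p). lra. Qed.

Lemma PPs_pos : forall p t, 0 < Pf (pal p) (pbe p) t + ps p.
Proof. intros. pose proof (PP_bounds p t). pose proof (p_pos p). unfold PP in *. lra. Qed.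

Lemma PP_zero : forall p t, PP p t = 0 -> cos t = 1.
Proof.
  intros p t H. unfold PP, Pf in H. pose proof (COS_bound t). pose proof (p_be p).
  pose proof (p_le p). nra.
Qed.

Lemma evp_w : forall p t, evp p (ew p) t = PP p t / sqrt (PP p t + ps p).
Proof. intros. unfold evp, ew, eP, PP. simpl. unfold Pf, Rdiv. ring. Qed.

Lemma w_nonneg : forall p t, 0 <= evp p (ew p) t.
Proof.
  intros. rewrite evp_w. pose proof (PP_nonneg p t). pose proof (PPs_pos p t).
  unfold Rdiv. apply Rmult_le_pos; auto. left. apply Rinv_0_lt_compat, sqrt_lt_R0. auto.
Qed.

Lemma w_pos : forall p t, cos t <> 1 -> 0 < evp p (ew p) t.
Proof.
  intros. rewrite evp_w. pose proof (PP_nonneg p t). pose proof (PPs_pos p t).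
  assert (PP p t <> 0) by (intro E; apply PP_zero in E; auto).
  apply Rdiv_lt_0_compat; [lra|]. apply sqrt_lt_R0. auto.
Qed.

Lemma evp_deriv : forall p e t, (noIP e \/ PP p t <> 0) ->
  derivable_pt_lim (evp p e) t (evp p (dex (pbe p) e) t).
Proof. intros. unfold evp. apply ev_deriv; auto. apply PPs_pos. Qed.

Lemma evp_cont : forall p e t, noIP e -> continuity_pt (evp p e) t.
Proof. intros. eapply dl_cont. apply evp_deriv. auto. Qed.

Lemma noIP_ew : forall p, noIP (ew p).
Proof. intros; simpl; tauto. Qed.

Lemma cos_2kPI : forall k : Z, cos (2 * IZR k * PI) = 1 /\ sin (2 * IZR k * PI) = 0.
Proof.
  intro k. destruct (Z_le_gt_dec 0 k) as [h|h].
  - rewrite <- (Z2Nat.id k h). rewrite <- INR_IZR_INZ.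
    pose proof (cos_period 0 (Z.to_nat k)). pose proof (sin_period 0 (Z.to_nat k)).
    rewrite Rplus_0_l in *. rewrite cos_0 in *. rewrite sin_0 in *. auto.
  - assert (0 <= - k)%Z by lia.
    replace (2 * IZR k * PI) with (- (2 * IZR (Z.of_nat (Z.to_nat (-k))) * PI))
      by (rewrite Z2Nat.id by lia; rewrite opp_IZR; ring).
    rewrite cos_neg, sin_neg. rewrite <- INR_IZR_INZ.
    pose proof (cos_period 0 (Z.to_nat (-k))). pose proof (sin_period 0 (Z.to_nat (-k))).
    rewrite Rplus_0_l in *. rewrite cos_0 in *. rewrite sin_0 in *. split; lra.
Qed.

Lemma cos_eq_1_inv : forall t, cos t = 1 -> exists k : Z, t = 2 * IZR k * PI.
Proof.
  intros t H. assert (Hs : sin t = 0).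
  { pose proof (sin2_cos2 t). rewrite H in H0. unfold Rsqr in H0. nra. }
  destruct (sin_eq_0_0 t Hs) as [k Hk].
  destruct (Z.Even_or_Odd k) as [[j Hj]|[j Hj]].
  - exists j. rewrite Hk, Hj, mult_IZR. ring.
  - exfalso. rewrite Hk, Hj, plus_IZR, mult_IZR in H.
    replace ((2 * IZR j + 1) * PI) with (2 * IZR j * PI + PI) in H by ring.
    rewrite neg_cos in H. destruct (cos_2kPI j) as [E _]. rewrite E in H. lra.
Qed.

Lemma cos_per : forall t, cos (t + 2 * PI) = cos t.
Proof. intros. rewrite cos_plus, cos_2PI, sin_2PI. ring. Qed.
Lemma sin_per : forall t, sin (t + 2 * PI) = sin t.
Proof. intros. rewrite sin_plus, cos_2PI, sin_2PI. ring. Qed.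

Lemma evp_per : forall p e t, evp p e (t + 2 * PI) = evp p e t.
Proof.
  intros p e t. unfold evp. induction e; simpl; unfold Pf; rewrite ?cos_per, ?sin_per; auto;
  rewrite ?IHe1, ?IHe2; auto.
Qed.

Definition Xraw (p : prm) : R -> R :=
  proj1_sig (constructive_indefinite_description _
     (prim_global (evp p (ew p)) (fun t => evp_cont p (ew p) t (noIP_ew p)))).
Definition XX (p : prm) (t : R) : R := Xraw p t - Xraw p 0.
Definition TT (p : prm) : R := XX p (2 * PI).

Lemma XX_deriv : forall p t, derivable_pt_lim (XX p) t (evp p (ew p) t).
Proof.
  intros. unfold XX. replace (evp p (ew p) t) with (evp p (ew p) t - 0) by ring.
  apply dl_minus; [|apply dl_const].
  exact (proj2_sig (constructive_indefinite_description _
     (prim_global (evp p (ew p)) (fun t => evp_cont p (ew p) t (noIP_ew p)))) t).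
Qed.

Lemma XX_0 : forall p, XX p 0 = 0.
Proof. intros. unfold XX. ring. Qed.

Lemma XX_cont : forall p t, continuity_pt (XX p) t.
Proof. intros. eapply dl_cont. apply XX_deriv. Qed.

Lemma XX_mono : forall p a b, a <= b -> XX p a <= XX p b.
Proof.
  intros p a b H. destruct (Req_dec a b) as [->|Hne]; [lra|].
  destruct (MVT_cor2 (XX p) (evp p (ew p)) a b ltac:(lra) (fun c _ => XX_deriv p c))
    as [c [Hc _]].
  pose proof (w_nonneg p c). nra.
Qed.

Lemma XX_strict : forall p a b, a < b -> XX p a < XX p b.
Proof.
  intros p a b H. set (b' := Rmin b (a + PI / 2)).
  pose proof PI_RGT_0.
  assert (Hb' : a < b' <= b /\ b' <= a + PI/2).
  { unfold b'. split; [split|]. apply Rmin_glb_lt; lra. apply Rmin_l. apply Rmin_r. }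
  set (m := (a + b') / 2).
  destruct (MVT_cor2 (XX p) (evp p (ew p)) a m ltac:(unfold m; lra) (fun c _ => XX_deriv p c))
    as [c1 [Hr1 Hc1]].
  destruct (MVT_cor2 (XX p) (evp p (ew p)) m b' ltac:(unfold m; lra) (fun c _ => XX_deriv p c))
    as [c2 [Hr2 Hc2]].
  pose proof (XX_mono p b' b ltac:(lra)).
  pose proof (w_nonneg p c1). pose proof (w_nonneg p c2).
  destruct (Req_dec (cos c1) 1) as [E1|E1].
  - destruct (Req_dec (cos c2) 1) as [E2|E2].
    + exfalso.
      assert (S1 : sin c1 = 0) by (pose proof (sin2_cos2 c1) as Q; rewrite E1 in Q; unfold Rsqr in Q; nra).
      assert (S2 : sin c2 = 0) by (pose proof (sin2_cos2 c2) as Q; rewrite E2 in Q; unfold Rsqr in Q; nra).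
      assert (Q : 0 < sin (c2 - c1)) by (apply sin_gt_0; lra).
      rewrite sin_minus, S1, S2 in Q. lra.
    + pose proof (w_pos p c2 E2).
      assert (0 < XX p b' - XX p m) by (rewrite Hr2; apply Rmult_lt_0_compat; lra).
      assert (0 <= XX p m - XX p a) by (rewrite Hr1; apply Rmult_le_pos; lra). lra.
  - pose proof (w_pos p c1 E1).
    assert (0 < XX p m - XX p a) by (rewrite Hr1; apply Rmult_lt_0_compat; lra).
    assert (0 <= XX p b' - XX p m) by (rewrite Hr2; apply Rmult_le_pos; lra). lra.
Qed.

Lemma TT_pos : forall p, 0 < TT p.
Proof. intros. unfold TT. rewrite <- (XX_0 p). apply XX_strict. pose proof PI_RGT_0. lra. Qed.

Lemma XX_per : forall p t, XX p (t + 2 * PI) = XX p t + TT p.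
Proof.
  intros p t.
  assert (Hd : forall x, derivable_pt_lim (fun u => XX p (u + 2 * PI) - XX p u) x 0).
  { intro x. replace 0 with (evp p (ew p) (x + 2*PI) * (1 + 0) - evp p (ew p) x)
      by (rewrite evp_per; ring).
    apply dl_minus; [|apply XX_deriv].
    apply (dl_comp (fun u => u + 2 * PI) (XX p)); [|apply XX_deriv].
    apply dl_plus; [apply dl_id|apply dl_const]. }
  enough (XX p (t + 2 * PI) - XX p t = XX p (0 + 2 * PI) - XX p 0).
  { rewrite Rplus_0_l, XX_0 in H. unfold TT. lra. }
  destruct (Rle_dec 0 t).
  - apply (deriv_zero_const (fun u => XX p (u + 2 * PI) - XX p u)); auto.
  - symmetry. apply (deriv_zero_const (fun u => XX p (u + 2 * PI) - XX p u)); auto. lra.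
Qed.

Lemma XX_perZ : forall p t (k : Z), XX p (t + 2 * IZR k * PI) = XX p t + IZR k * TT p.
Proof.
  intros p t k.
  assert (Hn : forall n : nat, forall t, XX p (t + 2 * INR n * PI) = XX p t + INR n * TT p).
  { induction n as [|n IH]; intros u.
    - simpl. replace (u + 2 * 0 * PI) with u by ring. ring.
    - rewrite S_INR.
      replace (u + 2 * (INR n + 1) * PI) with ((u + 2 * INR n * PI) + 2 * PI) by ring.
      rewrite XX_per, IH. ring. }
  destruct (Z_le_gt_dec 0 k) as [h|h].
  - rewrite <- (Z2Nat.id k h), <- INR_IZR_INZ. apply Hn.
  - assert (h' : (0 <= -k)%Z) by lia.
    pose proof (Hn (Z.to_nat (-k)) (t + 2 * IZR k * PI)) as E.
    rewrite INR_IZR_INZ, Z2Nat.id, opp_IZR in E by lia.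
    replace (t + 2 * IZR k * PI + 2 * - IZR k * PI) with t in E by ring. lra.
Qed.

Lemma XX_surj : forall p y, exists t, XX p t = y.
Proof.
  intros p y. pose proof (TT_pos p) as HT.
  set (n := Z.to_nat (up (Rabs y / TT p))).
  assert (Hn : Rabs y < INR n * TT p).
  { unfold n. destruct (archimed (Rabs y / TT p)) as [A1 _].
    assert (0 <= Rabs y / TT p) by (apply Rmult_le_pos; [apply Rabs_pos|left; apply Rinv_0_lt_compat; lra]).
    assert (0 <= up (Rabs y / TT p))%Z by (apply le_IZR; lra).
    rewrite INR_IZR_INZ, Z2Nat.id by auto.
    apply (Rmult_lt_compat_r (TT p)) in A1; auto. unfold Rdiv in A1.
    rewrite Rmult_assoc, Rinv_l, Rmult_1_r in A1; lra. }
  pose proof (XX_perZ p 0 (Z.of_nat n)) as E1.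
  pose proof (XX_perZ p 0 (- Z.of_nat n)) as E2.
  rewrite XX_0, Rplus_0_l, Rplus_0_l, <- INR_IZR_INZ in E1.
  rewrite XX_0, Rplus_0_l, Rplus_0_l, opp_IZR, <- INR_IZR_INZ in E2.
  pose proof PI_RGT_0. pose proof (pos_INR n).
  destruct (IVT_cor (fun t => XX p t - y) (2 * - INR n * PI) (2 * INR n * PI)) as [t [Ht1 Ht2]].
  - intro x. apply continuity_pt_minus; [apply XX_cont|apply continuity_pt_const; intros a b; auto].
  - nra.
  - simpl. rewrite E1, E2. pose proof (Rabs_def2 y (INR n * TT p)) as [R1 R2]. nra. nra.
  - exists t. lra.
Qed.

Definition Th (p : prm) (y : R) : R :=
  proj1_sig (constructive_indefinite_description _ (XX_surj p y)).

Lemma XX_Th : forall p y, XX p (Th p y) = y.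
Proof. intros. exact (proj2_sig (constructive_indefinite_description _ (XX_surj p y))). Qed.

Lemma XX_inj : forall p a b, XX p a = XX p b -> a = b.
Proof.
  intros p a b H. destruct (Rtotal_order a b) as [h|[h|h]]; auto;
  apply (XX_strict p) in h; lra.
Qed.

Lemma Th_XX : forall p t, Th p (XX p t) = t.
Proof. intros. apply (XX_inj p). apply XX_Th. Qed.

Lemma Th_strict : forall p x y, x < y -> Th p x < Th p y.
Proof.
  intros p x y H. destruct (Rlt_le_dec (Th p x) (Th p y)) as [h|h]; auto.
  apply (XX_mono p) in h. rewrite !XX_Th in h. lra.
Qed.

Lemma Th_mono : forall p x y, x <= y -> Th p x <= Th p y.
Proof. intros. destruct (Req_dec x y) as [->|]; [lra|]. left; apply Th_strict; lra. Qed.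

Lemma Th_0 : forall p, Th p 0 = 0.
Proof. intros. rewrite <- (XX_0 p) at 1. apply Th_XX. Qed.

Lemma Th_perZ : forall p y (k : Z), Th p (y + IZR k * TT p) = Th p y + 2 * IZR k * PI.
Proof.
  intros. apply (XX_inj p). rewrite XX_Th, XX_perZ, XX_Th. auto.
Qed.

Lemma Th_T : forall p, Th p (TT p) = 2 * PI.
Proof. intros. unfold TT. apply Th_XX. Qed.

Lemma Th_cont : forall p y, continuity_pt (Th p) y.
Proof.
  intros p y. unfold continuity_pt, continue_in, limit1_in, limit_in. simpl. unfold R_dist.
  intros eps He. set (t := Th p y).
  assert (H1 : XX p (t - eps) < y) by (rewrite <- (XX_Th p y); apply XX_strict; unfold t; lra).
  assert (H2 : y < XX p (t + eps)) by (rewrite <- (XX_Th p y); apply XX_strict; unfold t; lra).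
  exists (Rmin (y - XX p (t - eps)) (XX p (t + eps) - y)). split.
  - apply Rmin_glb_lt; lra.
  - intros z [_ Hz]. pose proof (Rmin_l (y - XX p (t - eps)) (XX p (t + eps) - y)).
    pose proof (Rmin_r (y - XX p (t - eps)) (XX p (t + eps) - y)).
    destruct (Rabs_def2 _ _ Hz).
    assert (Th p z < t + eps) by (rewrite <- (Th_XX p (t + eps)); apply Th_strict; lra).
    assert (t - eps < Th p z) by (rewrite <- (Th_XX p (t - eps)); apply Th_strict; lra).
    apply Rabs_def1; unfold t in *; lra.
Qed.

Lemma w_pos' : forall p t, PP p t <> 0 -> 0 < evp p (ew p) t.
Proof.
  intros. rewrite evp_w. pose proof (PP_nonneg p t). pose proof (PPs_pos p t).
  apply Rdiv_lt_0_compat; [lra|]. apply sqrt_lt_R0. auto.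
Qed.

Lemma Th_deriv : forall p y, PP p (Th p y) <> 0 ->
  derivable_pt_lim (Th p) y (/ evp p (ew p) (Th p y)).
Proof.
  intros p y Hc. set (t := Th p y). set (w := evp p (ew p) t).
  assert (Hw : 0 < w) by (apply w_pos'; auto).
  intros eps He.
  set (rho := Rmin (w / 2) (eps * w * w / 2)).
  assert (Hrho : 0 < rho) by (unfold rho; apply Rmin_glb_lt; [lra| assert (0 < eps * w) by (apply Rmult_lt_0_compat; lra); assert (0 < eps * w * w) by (apply Rmult_lt_0_compat; lra); lra]).
  destruct (XX_deriv p t rho Hrho) as [[d1 Hd1] Hd].
  simpl in Hd.
  destruct (Th_cont p y d1 Hd1) as [d2 [Hd2 Hc2]]. simpl in Hc2. unfold R_dist in Hc2.
  exists (mkposreal d2 Hd2). intros h Hh Hhd. simpl in Hhd.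
  set (k := Th p (y + h) - t).
  assert (Hk : k <> 0).
  { unfold k, t. intro E. assert (Th p (y + h) = Th p y) by lra.
    apply (f_equal (XX p)) in H. rewrite !XX_Th in H. lra. }
  assert (Hkd : Rabs k < d1).
  { unfold k. apply Hc2. split; [split; [exact I|lra]|]. replace (y + h - y) with h by ring. auto. }
  specialize (Hd k Hk Hkd).
  assert (Ex : XX p (t + k) - XX p t = h).
  { unfold k. replace (t + (Th p (y + h) - t)) with (Th p (y + h)) by ring.
    unfold t. rewrite !XX_Th. ring. }
  rewrite Ex in Hd.
  replace ((Th p (y + h) - Th p y) / h) with (/ (h / k)) by (fold t; fold k; field; split; auto).
  set (q := h / k) in *.
  destruct (Rabs_def2 _ _ Hd) as [Q1 Q2].
  assert (rho <= w / 2) by apply Rmin_l.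
  assert (rho <= eps * w * w / 2) by apply Rmin_r.
  fold w in Q1, Q2. assert (Hq : w / 2 < q) by lra.
  replace (/ q - / w) with ((w - q) / (q * w)) by (field; split; lra).
  unfold Rdiv. rewrite Rabs_mult, Rabs_inv, (Rabs_right (q * w)) by nra.
  apply (Rmult_lt_reg_r (q * w)); [nra|].
  rewrite Rmult_assoc, Rinv_l, Rmult_1_r by nra.
  assert (Rabs (w - q) < rho) by (rewrite Rabs_minus_sym; apply Rabs_def1; lra).
  assert (0 < eps * ((q - w/2) * w)) by (apply Rmult_lt_0_compat; [lra|apply Rmult_lt_0_compat; lra]).
  nra.
Qed.

Definition Dx (p : prm) (e : ex) : ex := EMul (dex (pbe p) e) einvw.
Definition comp (p : prm) (e : ex) (x : R) : R := evp p e (Th p (TT p * x)).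

Lemma einvw_inv : forall p t, PP p t <> 0 -> evp p einvw t = / evp p (ew p) t.
Proof.
  intros p t H. rewrite evp_w. unfold evp, einvw. simpl. fold (PP p t).
  pose proof (PPs_pos p t). unfold PP in *.
  assert (0 < sqrt (Pf (pal p) (pbe p) t + ps p)) by (apply sqrt_lt_R0; auto).
  field. lra.
Qed.

Lemma comp_deriv : forall p e x, PP p (Th p (TT p * x)) <> 0 ->
  derivable_pt_lim (comp p e) x (TT p * comp p (Dx p e) x).
Proof.
  intros p e x H. unfold comp.
  apply (dl_ext _ (fun x => evp p e (Th p (TT p * x))) _ _
          (evp p (dex (pbe p) e) (Th p (TT p * x)) * (/ evp p (ew p) (Th p (TT p * x)) * (0 * x + TT p * 1)))).
  - reflexivity.
  - rewrite evp_w. unfold Dx, evp, einvw. simpl. unfold PP in *.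
    pose proof (PPs_pos p (Th p (TT p * x))).
    assert (0 < sqrt (Pf (pal p) (pbe p) (Th p (TT p * x)) + ps p)) by (apply sqrt_lt_R0; auto).
    field. split; lra.
  - apply (dl_comp (fun x => Th p (TT p * x)) (evp p e)).
    + apply (dl_comp (fun x => TT p * x) (Th p)).
      * apply (dl_mult (fun _ => TT p) (fun x => x)); [apply dl_const|apply dl_id].
      * apply Th_deriv. auto.
    + apply evp_deriv. auto.
Qed.

Lemma comp_cont : forall p e x, noIP e -> continuity_pt (comp p e) x.
Proof.
  intros p e x H. unfold comp.
  apply (continuity_pt_comp (fun x => Th p (TT p * x)) (evp p e)).
  - apply (continuity_pt_comp (fun x => TT p * x) (Th p)).
    + apply continuity_pt_mult; [apply continuity_pt_const; intros a b; auto|apply derivable_continuous_pt; apply derivable_pt_id].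
    + apply Th_cont.
  - apply evp_cont; auto.
Qed.

Lemma comp_per : forall p e x, comp p e (x + 1) = comp p e x.
Proof.
  intros. unfold comp. replace (TT p * (x + 1)) with (TT p * x + IZR 1 * TT p) by (simpl; ring).
  rewrite Th_perZ. replace (2 * IZR 1 * PI) with (2 * PI) by (simpl; ring). apply evp_per.
Qed.

Lemma cusp_int : forall p x, PP p (Th p (TT p * x)) = 0 -> isint x.
Proof.
  intros p x H. apply PP_zero in H. destruct (cos_eq_1_inv _ H) as [k Hk].
  exists k. pose proof (XX_perZ p 0 k) as E. rewrite Rplus_0_l, XX_0, Rplus_0_l in E.
  rewrite <- Hk, XX_Th in E. pose proof (TT_pos p).
  apply (Rmult_eq_reg_l (TT p)); lra.
Qed.

Lemma noint_ok : forall p x, ~ isint x -> PP p (Th p (TT p * x)) <> 0.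
Proof. intros p x H E. apply H. eapply cusp_int; eauto. Qed.

Lemma comp_eP : forall p x, comp p (eP p) x = PP p (Th p (TT p * x)).
Proof. intros. unfold comp. apply evp_eP. Qed.

Definition eJ (p : prm) : ex := EMul (dex (pbe p) (eP p)) EV.

Lemma noIP_eJ : forall p, noIP (eJ p).
Proof. intros; simpl; tauto. Qed.

(* P * P' * V * IP = P' * V *)
Lemma comp_J : forall p x, PP p (Th p (TT p * x)) <> 0 ->
  comp p (eP p) x * comp p (Dx p (eP p)) x = comp p (eJ p) x.
Proof.
  intros p x H. rewrite comp_eP. unfold comp, Dx, eJ, einvw. simpl.
  unfold evp, PP in *. simpl. field. auto.
Qed.

Lemma key_identity : forall p t, PP p t <> 0 ->
  (evp p (Dx p (eP p)) t) ^ 2 =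
   2 * evp p (Dx p (eJ p)) t + 2 * PP p t + ps p - 2 * pal p.
Proof.
  intros p t H. unfold evp, Dx, eJ, eP, einvw, PP in *. simpl.
  pose proof (PPs_pos p t) as Hps.
  set (V := sqrt (Pf (pal p) (pbe p) t + ps p)).
  assert (HV : V * V = Pf (pal p) (pbe p) t + ps p) by (apply sqrt_sqrt; lra).
  assert (HV0 : 0 < V) by (apply sqrt_lt_R0; auto).
  pose proof (sin2_cos2 t) as SC. unfold Rsqr in SC.
  pose proof (p_case p) as Hc.
  unfold Pf in *.
  set (P := pal p - pbe p * cos t) in *.
  assert (Hsin : sin t * sin t = 1 - cos t * cos t) by lra.
  assert (Hcos : pbe p * cos t = pal p - P) by (unfold P; ring).
  apply (Rmult_eq_reg_r (P ^ 2)); [|apply pow_nonzero; auto].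
  replace ((0 + (0 * cos t + - pbe p * (-1 * sin t))) * (V * / P)) with (pbe p * sin t * V / P) by (field; auto).
  set (be := pbe p) in *. set (al := pal p) in *. set (sn := sin t) in *. set (c := cos t) in *.
  set (s := ps p) in *.
  transitivity (be * be * (sn * sn) * (V * V)); [field; auto|].
  transitivity (2 * P * ((be * c) * (V * V) + be * be * (sn * sn) / 2) + (2 * P + s - 2 * al) * P ^ 2);
    [|field; split; lra].
  rewrite HV, Hsin.
  replace (be * be * (1 - c * c)) with (be * be - (be * c) * (be * c)) by ring.
  rewrite Hcos. destruct Hc as [Hs|Hab]; [rewrite Hs|rewrite Hab]; field.
Qed.

Definition ePw (p : prm) : ex := EMul (eP p) (ew p).
Lemma noIP_ePw : forall p, noIP (ePw p).
Proof. intros; simpl; tauto. Qed.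

Definition Gf (p : prm) : R -> R :=
  proj1_sig (constructive_indefinite_description _
     (prim_global (evp p (ePw p)) (fun t => evp_cont p (ePw p) t (noIP_ePw p)))).
Lemma Gf_deriv : forall p t, derivable_pt_lim (Gf p) t (evp p (ePw p) t).
Proof.
  intros. exact (proj2_sig (constructive_indefinite_description _
     (prim_global (evp p (ePw p)) (fun t => evp_cont p (ePw p) t (noIP_ePw p)))) t).
Qed.

Lemma evp_mul : forall p a b t, evp p (EMul a b) t = evp p a t * evp p b t.
Proof. reflexivity. Qed.

Definition AA (p : prm) : R := Gf p (2 * PI) - Gf p 0.

Lemma AA_nonneg : forall p, 0 <= AA p.
Proof.
  intros p. unfold AA. pose proof PI_RGT_0.
  destruct (MVT_cor2 (Gf p) (evp p (ePw p)) 0 (2 * PI) ltac:(lra) (fun c _ => Gf_deriv p c))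
    as [c [Hc _]]. rewrite Hc.
  apply Rmult_le_pos; [|lra]. unfold ePw. rewrite evp_mul, evp_eP. apply Rmult_le_pos; [apply PP_nonneg|apply w_nonneg].
Qed.

Definition den (p : prm) : R := TT p ^ 2 / 2 + AA p / TT p.
Lemma den_pos : forall p, 0 < den p.
Proof.
  intros. unfold den. pose proof (TT_pos p). pose proof (AA_nonneg p).
  assert (0 <= AA p / TT p) by (apply Rmult_le_pos; [auto|left; apply Rinv_0_lt_compat; auto]).
  nra.
Qed.

Definition lam (p : prm) (c : R) : R := - c / den p.
Definition mu (p : prm) (c : R) : R := - lam p c * TT p ^ 2 / 2.
Definition aa (p : prm) (c : R) : R :=
  -2 * lam p c * TT p ^ 2 * c + lam p c ^ 2 * TT p ^ 2 * (ps p - 2 * pal p).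
Definition phi (p : prm) (c : R) (x : R) : R := c + lam p c * comp p (eP p) x.
Definition gg (p : prm) (c : R) (x : R) : R := lam p c * TT p * comp p (Dx p (eP p)) x.
Definition LL (p : prm) (c : R) (x : R) : R := 2 * lam p c ^ 2 * TT p * comp p (eJ p) x.
Definition LLd (p : prm) (c : R) (x : R) : R := 2 * lam p c ^ 2 * TT p ^ 2 * comp p (Dx p (eJ p)) x.
Definition Fphi (p : prm) (c : R) (x : R) : R := c * x + lam p c / TT p * Gf p (Th p (TT p * x)).

Lemma lam_neq0 : forall p c, c <> 0 -> lam p c <> 0.
Proof.
  intros. unfold lam. pose proof (den_pos p). intro E. apply H.
  apply (Rmult_eq_compat_r (den p)) in E. unfold Rdiv in E.
  rewrite Rmult_assoc, Rinv_l in E by lra. lra.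
Qed.

Lemma mu_eq : forall p c, mu p c = c + lam p c * AA p / TT p.
Proof.
  intros. unfold mu, lam. pose proof (den_pos p). pose proof (TT_pos p).
  replace (AA p) with (den p * TT p - TT p ^ 3 / 2) by (unfold den; field; lra).
  field. split; lra.
Qed.

Lemma phi_cont : forall p c x, continuity_pt (phi p c) x.
Proof.
  intros. unfold phi. apply continuity_pt_plus; [apply continuity_pt_const; intros a b; auto|].
  apply continuity_pt_mult; [apply continuity_pt_const; intros a b; auto|].
  apply comp_cont. simpl; tauto.
Qed.

Lemma phi_per : forall p c x, phi p c (x + 1) = phi p c x.
Proof. intros. unfold phi. rewrite comp_per. auto. Qed.

Lemma phi_deriv : forall p c x, PP p (Th p (TT p * x)) <> 0 ->
  derivable_pt_lim (phi p c) x (gg p c x).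
Proof.
  intros. unfold phi, gg.
  apply (dl_ext _ (fun x => c + lam p c * comp p (eP p) x) _ _ (0 + (0 * comp p (eP p) x + lam p c * (TT p * comp p (Dx p (eP p)) x)))); [reflexivity|ring|].
  apply (dl_plus (fun _ => c) (fun x => lam p c * comp p (eP p) x)); [apply dl_const|].
  apply (dl_mult (fun _ => lam p c) (comp p (eP p))); [apply dl_const|]. apply comp_deriv; auto.
Qed.

Lemma psi2_deriv : forall p c x, PP p (Th p (TT p * x)) <> 0 ->
  derivable_pt_lim (fun x => (phi p c x - c) ^ 2) x (LL p c x).
Proof.
  intros p c x H. unfold phi, LL.
  apply (dl_ext _ (fun x => (lam p c * comp p (eP p) x) * (lam p c * comp p (eP p) x)) _ _
     ((0 * comp p (eP p) x + lam p c * (TT p * comp p (Dx p (eP p)) x)) * (lam p c * comp p (eP p) x) +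
      (lam p c * comp p (eP p) x) * (0 * comp p (eP p) x + lam p c * (TT p * comp p (Dx p (eP p)) x)))).
  - intro. ring.
  - rewrite <- comp_J by auto. ring.
  - apply (dl_mult (fun x => lam p c * comp p (eP p) x) (fun x => lam p c * comp p (eP p) x));
    apply (dl_mult (fun _ => lam p c) (comp p (eP p))); try apply dl_const; apply comp_deriv; auto.
Qed.

Lemma LL_deriv : forall p c x, PP p (Th p (TT p * x)) <> 0 ->
  derivable_pt_lim (LL p c) x (LLd p c x).
Proof.
  intros p c x H. unfold LL, LLd.
  apply (dl_ext _ (fun x => 2 * lam p c ^ 2 * TT p * comp p (eJ p) x) _ _
     (0 * comp p (eJ p) x + 2 * lam p c ^ 2 * TT p * (TT p * comp p (Dx p (eJ p)) x))).
  - reflexivity.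
  - ring.
  - apply (dl_mult (fun _ => 2 * lam p c ^ 2 * TT p) (comp p (eJ p))); [apply dl_const|apply comp_deriv; auto].
Qed.

Lemma LL_cont : forall p c x, continuity_pt (LL p c) x.
Proof.
  intros. unfold LL. apply continuity_pt_mult; [apply continuity_pt_const; intros a b; auto|].
  apply comp_cont. apply noIP_eJ.
Qed.

Lemma gg_sq : forall p c x, PP p (Th p (TT p * x)) <> 0 ->
  gg p c x ^ 2 = LLd p c x - 4 * mu p c * phi p c x + aa p c.
Proof.
  intros p c x H. unfold gg, LLd, phi, mu, aa, comp.
  replace ((lam p c * TT p * evp p (Dx p (eP p)) (Th p (TT p * x))) ^ 2)
    with (lam p c ^ 2 * TT p ^ 2 * (evp p (Dx p (eP p)) (Th p (TT p * x))) ^ 2) by ring.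
  rewrite key_identity by auto. rewrite evp_eP. field.
Qed.

Lemma Fphi_deriv : forall p c x, PP p (Th p (TT p * x)) <> 0 ->
  derivable_pt_lim (Fphi p c) x (phi p c x).
Proof.
  intros p c x H. unfold Fphi, phi.
  pose proof (TT_pos p).
  pose proof (w_pos' p _ H) as Hw.
  apply (dl_ext _ (fun x => c * x + lam p c / TT p * Gf p (Th p (TT p * x))) _ _
     ((0 * x + c * 1) + (0 * Gf p (Th p (TT p * x)) + lam p c / TT p *
        (evp p (ePw p) (Th p (TT p * x)) * (/ evp p (ew p) (Th p (TT p * x)) * (0 * x + TT p * 1)))))).
  - reflexivity.
  - unfold ePw. unfold comp. rewrite evp_mul, evp_eP. field. split; lra.
  - apply (dl_plus (fun x => c * x) (fun x => lam p c / TT p * Gf p (Th p (TT p * x)))).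
    { apply (dl_mult (fun _ => c) (fun x => x)); [apply dl_const|apply dl_id]. }
    apply (dl_mult (fun _ => lam p c / TT p) (fun x => Gf p (Th p (TT p * x)))); [apply dl_const|].
    apply (dl_comp (fun x => Th p (TT p * x)) (Gf p)); [|apply Gf_deriv].
    apply (dl_comp (fun x => TT p * x) (Th p)).
    + apply (dl_mult (fun _ => TT p) (fun x => x)); [apply dl_const|apply dl_id].
    + apply Th_deriv. auto.
Qed.

Lemma Fphi_cont : forall p c x, continuity_pt (Fphi p c) x.
Proof.
  intros. unfold Fphi. apply continuity_pt_plus.
  - apply continuity_pt_mult; [apply continuity_pt_const; intros a b; auto|].
    apply derivable_continuous_pt; apply derivable_pt_id.
  - apply continuity_pt_mult; [apply continuity_pt_const; intros a b; auto|].
    apply (continuity_pt_comp (fun x => Th p (TT p * x)) (Gf p)).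
    + apply (continuity_pt_comp (fun x => TT p * x) (Th p)).
      * apply continuity_pt_mult; [apply continuity_pt_const; intros a b; auto|apply derivable_continuous_pt; apply derivable_pt_id].
      * apply Th_cont.
    + eapply dl_cont; apply Gf_deriv.
Qed.

Lemma deriv_zero_right : forall f M l, (forall x, M <= x -> f x = 0) ->
  derivable_pt_lim f M l -> l = 0.
Proof.
  intros f M l Hz H. destruct (Req_dec l 0) as [|Hn]; auto. exfalso.
  destruct (H (Rabs l) (Rabs_pos_lt l Hn)) as [[d Hd] Hdd]. simpl in Hdd.
  specialize (Hdd (d/2) ltac:(lra) ltac:(rewrite Rabs_right; lra)).
  rewrite !Hz in Hdd by lra. replace ((0 - 0) / (d/2) - l) with (- l) in Hdd by (field; lra).
  rewrite Rabs_Ropp in Hdd. lra.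
Qed.

Lemma deriv_zero_left : forall f M l, (forall x, x <= M -> f x = 0) ->
  derivable_pt_lim f M l -> l = 0.
Proof.
  intros f M l Hz H. destruct (Req_dec l 0) as [|Hn]; auto. exfalso.
  destruct (H (Rabs l) (Rabs_pos_lt l Hn)) as [[d Hd] Hdd]. simpl in Hdd.
  specialize (Hdd (-(d/2)) ltac:(lra) ltac:(rewrite Rabs_left; lra)).
  rewrite !Hz in Hdd by lra. replace ((0 - 0) / -(d/2) - l) with (- l) in Hdd by (field; lra).
  rewrite Rabs_Ropp in Hdd. lra.
Qed.

Lemma cst_cont : forall (k x : R), continuity_pt (fun _ => k) x.
Proof. intros. apply continuity_pt_const. intros a b; auto. Qed.

Lemma tw : forall p c, traveling_wave c (phi p c).
Proof.
  intros p c. split; [apply phi_per|].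
  pose proof (TT_pos p) as HT.
  exists (gg p c), (mu p c), (aa p c). split; [split|split].
  - intros x y Hxy. apply HK_FTC; auto.
    + intros; apply phi_cont.
    + intros t _ Ht. apply phi_deriv. apply noint_ok; auto.
  - intros x y Hxy.
    set (F2 := fun z => LL p c z + 2 * lam p c * TT p ^ 2 * (Fphi p c z - c * z)
                        + lam p c ^ 2 * TT p ^ 2 * (ps p - 2 * pal p) * z).
    exists (F2 y - F2 x). apply HK_FTC; auto.
    + intros t _. unfold F2. apply continuity_pt_plus; [apply continuity_pt_plus|].
      * apply LL_cont.
      * apply continuity_pt_mult; [apply cst_cont|].
        apply continuity_pt_minus; [apply Fphi_cont|].
        apply continuity_pt_mult; [apply cst_cont|apply derivable_continuous_pt; apply derivable_pt_id].
      * apply continuity_pt_mult; [apply cst_cont|apply derivable_continuous_pt; apply derivable_pt_id].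
    + intros t _ Ht. pose proof (noint_ok p t Ht) as Hok. unfold F2.
      apply (dl_ext _ (fun z => LL p c z + 2 * lam p c * TT p ^ 2 * (Fphi p c z - c * z)
                        + lam p c ^ 2 * TT p ^ 2 * (ps p - 2 * pal p) * z) _ _
        (LLd p c t + (0 * (Fphi p c t - c * t) + 2 * lam p c * TT p ^ 2 * (phi p c t - (0 * t + c * 1)))
         + (0 * t + lam p c ^ 2 * TT p ^ 2 * (ps p - 2 * pal p) * 1))).
      * reflexivity.
      * rewrite gg_sq by auto. unfold mu, aa. field.
      * apply dl_plus; [apply dl_plus|].
        -- apply LL_deriv; auto.
        -- apply (dl_mult (fun _ => 2 * lam p c * TT p ^ 2) (fun z => Fphi p c z - c * z)); [apply dl_const|].
           apply dl_minus; [apply Fphi_deriv; auto|].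
           apply (dl_mult (fun _ => c) (fun z => z)); [apply dl_const|apply dl_id].
        -- apply (dl_mult (fun _ => lam p c ^ 2 * TT p ^ 2 * (ps p - 2 * pal p)) (fun z => z));
             [apply dl_const|apply dl_id].
  - replace (mu p c) with (Fphi p c 1 - Fphi p c 0).
    + apply HK_FTC; [lra| |].
      * intros; apply Fphi_cont.
      * intros t _ Ht. apply Fphi_deriv. apply noint_ok; auto.
    + unfold Fphi. rewrite (Rmult_1_r (TT p)), (Rmult_0_r (TT p)), Rmult_1_r, Rmult_0_r. rewrite Th_T, Th_0. rewrite mu_eq. unfold AA. field. lra.
  - intros D M HM Hd Hsupp.
    assert (Dc : forall n x, continuity_pt (D n) x) by (intros; eapply dl_cont; apply Hd).
    set (r := fun x => (-4 * mu p c * phi p c x + aa p c) * D 0%nat x + (phi p c x - c) ^ 2 * D 2%nat x).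
    assert (Hrc : forall x, continuity_pt r x).
    { intro x. unfold r. apply continuity_pt_plus; apply continuity_pt_mult; auto.
      - apply continuity_pt_plus; [|apply cst_cont]. apply continuity_pt_mult; [apply cst_cont|apply phi_cont].
      - simpl. apply continuity_pt_mult; [|apply continuity_pt_mult; [|apply cst_cont]];
        apply continuity_pt_minus; try apply phi_cont; apply cst_cont. }
    destruct (prim_local r (- M - 1) (M + 1) Hrc) as [RR HR].
    assert (D0M : D 0%nat M = 0) by (apply Hsupp; rewrite Rabs_right; lra).
    assert (D0mM : D 0%nat (-M) = 0) by (apply Hsupp; rewrite Rabs_left; lra).
    assert (D1M : D 1%nat M = 0).
    { apply (deriv_zero_right (D 0%nat) M); [|apply Hd].
      intros x Hx. apply Hsupp. rewrite Rabs_right; lra. }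
    assert (D1mM : D 1%nat (-M) = 0).
    { apply (deriv_zero_left (D 0%nat) (-M)); [|apply Hd].
      intros x Hx. apply Hsupp. rewrite Rabs_left; lra. }
    exists (RR M - RR (-M)). split.
    + set (Ftot := fun x => LL p c x * D 0%nat x - (phi p c x - c) ^ 2 * D 1%nat x + RR x).
      replace (RR M - RR (-M)) with (Ftot M - Ftot (-M))
        by (unfold Ftot; rewrite D0M, D0mM, D1M, D1mM; ring).
      apply HK_FTC; [lra| |].
      * intros t Ht. unfold Ftot. apply continuity_pt_plus; [apply continuity_pt_minus|].
        -- apply continuity_pt_mult; [apply LL_cont|auto].
        -- simpl. apply continuity_pt_mult; auto.
           apply continuity_pt_mult; [|apply continuity_pt_mult; [|apply cst_cont]];
           apply continuity_pt_minus; try apply phi_cont; apply cst_cont.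
        -- eapply dl_cont. apply HR. lra.
      * intros t Ht Hi. pose proof (noint_ok p t Hi) as Hok. unfold Ftot.
        apply (dl_ext _ (fun x => LL p c x * D 0%nat x - (phi p c x - c) ^ 2 * D 1%nat x + RR x) _ _
           ((LLd p c t * D 0%nat t + LL p c t * D 1%nat t)
            - (LL p c t * D 1%nat t + (phi p c t - c) ^ 2 * D 2%nat t) + r t)).
        -- reflexivity.
        -- unfold r. rewrite gg_sq by auto. ring.
        -- apply dl_plus; [apply dl_minus|].
           ++ apply dl_mult; [apply LL_deriv; auto|apply Hd].
           ++ apply (dl_mult (fun x => (phi p c x - c) ^ 2) (D 1%nat)); [apply psi2_deriv; auto|apply Hd].
           ++ apply HR. lra.
    + apply HK_FTC; [lra| |].
      * intros t Ht. eapply dl_cont. apply HR. lra.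
      * intros t Ht _. apply HR. lra.
Qed.

Fixpoint iterDx (p : prm) (n : nat) (e : ex) : ex :=
  match n with O => e | S m => Dx p (iterDx p m e) end.

Definition Dn (p : prm) (c : R) (n : nat) : R -> R :=
  match n with
  | O => phi p c
  | S m => fun x => lam p c * TT p ^ n * comp p (iterDx p n (eP p)) x
  end.

Lemma tower : forall p c n x, PP p (Th p (TT p * x)) <> 0 ->
  derivable_pt_lim (Dn p c n) x (Dn p c (S n) x).
Proof.
  intros p c n x H. destruct n as [|m].
  - simpl. eapply dl_ext; [reflexivity| |apply phi_deriv; auto]. unfold gg. ring.
  - simpl Dn.
    apply (dl_ext _ (fun x => lam p c * TT p ^ S m * comp p (iterDx p (S m) (eP p)) x) _ _
       (0 * comp p (iterDx p (S m) (eP p)) x + lam p c * TT p ^ S m * (TT p * comp p (Dx p (iterDx p (S m) (eP p))) x))).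
    + reflexivity.
    + simpl. ring.
    + apply (dl_mult (fun _ => lam p c * TT p ^ S m)); [apply dl_const|]. apply comp_deriv; auto.
Qed.

Lemma phi_c_PP : forall p c x, c <> 0 -> phi p c x <> c -> PP p (Th p (TT p * x)) <> 0.
Proof.
  intros p c x Hc H E. apply H. unfold phi. rewrite comp_eP, E. ring.
Qed.

Lemma PP_phi_c : forall p c x, c <> 0 -> PP p (Th p (TT p * x)) <> 0 -> phi p c x <> c.
Proof.
  intros p c x Hc H E. unfold phi in E. rewrite comp_eP in E. pose proof (lam_neq0 p c Hc).
  apply H. apply (Rmult_eq_reg_l (lam p c)); auto. lra.
Qed.

Lemma Th_at : forall p t, Th p (TT p * (XX p t / TT p)) = t.
Proof.
  intros. pose proof (TT_pos p). replace (TT p * (XX p t / TT p)) with (XX p t) by (field; lra).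
  apply Th_XX.
Qed.

Lemma phi_at : forall p c t, phi p c (XX p t / TT p) = c + lam p c * PP p t.
Proof. intros. unfold phi. rewrite comp_eP, Th_at. auto. Qed.

Lemma nonconst : forall p c, c <> 0 -> exists x y, phi p c x <> phi p c y.
Proof.
  intros p c Hc. exists (XX p 0 / TT p), (XX p PI / TT p). rewrite !phi_at.
  unfold PP, Pf. rewrite cos_0, cos_PI. pose proof (lam_neq0 p c Hc). pose proof (p_be p).
  intro E. assert (lam p c * (2 * pbe p) = 0) by lra.
  apply Rmult_integral in H1. destruct H1; lra.
Qed.

Lemma transl_deriv : forall f x tau l, derivable_pt_lim f (x + tau) l ->
  derivable_pt_lim (fun y => f (y + tau)) x l.
Proof.
  intros. apply (dl_ext _ (fun y => f (y + tau)) _ _ (l * (1 + 0))); [reflexivity|ring|].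
  apply (dl_comp (fun y => y + tau) f); [apply dl_plus; [apply dl_id|apply dl_const]|auto].
Qed.

Lemma transl_gg : forall p1 p2 c tau x, c <> 0 ->
  (forall y, phi p1 c y = phi p2 c (y + tau)) ->
  PP p1 (Th p1 (TT p1 * x)) <> 0 ->
  gg p1 c x = gg p2 c (x + tau) /\ PP p2 (Th p2 (TT p2 * (x + tau))) <> 0.
Proof.
  intros p1 p2 c tau x Hc Ht H.
  assert (H2 : PP p2 (Th p2 (TT p2 * (x + tau))) <> 0).
  { apply (phi_c_PP p2 c); auto. rewrite <- Ht. apply PP_phi_c; auto. }
  split; auto.
  apply (dl_unique (phi p1 c) x).
  - apply phi_deriv; auto.
  - apply (dl_ext _ (fun y => phi p2 c (y + tau)) _ _ (gg p2 c (x + tau))); auto.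
    apply transl_deriv. apply phi_deriv; auto.
Qed.

Lemma vandermonde : forall k1 a1 b1 k2 a2 b2 y1 y2 y3,
  y1 <> y2 -> y1 <> y3 -> y2 <> y3 ->
  k1 * (y1 - a1) * (y1 - b1) = k2 * (y1 - a2) * (y1 - b2) ->
  k1 * (y2 - a1) * (y2 - b1) = k2 * (y2 - a2) * (y2 - b2) ->
  k1 * (y3 - a1) * (y3 - b1) = k2 * (y3 - a2) * (y3 - b2) ->
  k1 = k2 /\ k1 * (a1 + b1) = k2 * (a2 + b2) /\ k1 * (a1 * b1) = k2 * (a2 * b2).
Proof.
  intros k1 a1 b1 k2 a2 b2 y1 y2 y3 N12 N13 N23 E1 E2 E3.
  set (A := k1 - k2). set (B := - (k1 * (a1 + b1) - k2 * (a2 + b2))).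
  set (C := k1 * (a1 * b1) - k2 * (a2 * b2)).
  assert (F1 : A * y1 ^ 2 + B * y1 + C = 0) by (unfold A, B, C; lra).
  assert (F2 : A * y2 ^ 2 + B * y2 + C = 0) by (unfold A, B, C; lra).
  assert (F3 : A * y3 ^ 2 + B * y3 + C = 0) by (unfold A, B, C; lra).
  assert (G12 : (y1 - y2) * (A * (y1 + y2) + B) = 0) by lra.
  assert (G13 : (y1 - y3) * (A * (y1 + y3) + B) = 0) by lra.
  apply Rmult_integral in G12. apply Rmult_integral in G13.
  destruct G12 as [G12|G12]; [exfalso; lra|]. destruct G13 as [G13|G13]; [exfalso; lra|].
  assert (HA : A * (y2 - y3) = 0) by lra. apply Rmult_integral in HA.
  destruct HA as [HA|HA]; [|exfalso; lra].
  assert (HB : B = 0) by (rewrite HA in G12; lra).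
  assert (HC : C = 0) by (rewrite HA, HB in F1; lra).
  unfold A, B, C in *. split; [lra|split; lra].
Qed.

Lemma rel_gen : forall p c x, PP p (Th p (TT p * x)) <> 0 ->
  (phi p c x - c) * gg p c x ^ 2 * PP p (Th p (TT p * x)) =
  lam p c ^ 3 * TT p ^ 2 * ((pbe p)^2 - (pal p - PP p (Th p (TT p * x)))^2)
     * (PP p (Th p (TT p * x)) + ps p).
Proof.
  intros p c x H. unfold phi, gg. rewrite comp_eP. unfold comp, Dx, einvw, evp.
  set (t := Th p (TT p * x)) in *. simpl. unfold PP in *.
  pose proof (PPs_pos p t) as Hps.
  set (V := sqrt (Pf (pal p) (pbe p) t + ps p)).
  assert (HV : V * V = Pf (pal p) (pbe p) t + ps p) by (apply sqrt_sqrt; lra).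
  pose proof (sin2_cos2 t) as SC. unfold Rsqr in SC.
  assert (Hc : pal p - Pf (pal p) (pbe p) t = pbe p * cos t) by (unfold Pf; ring).
  rewrite Hc.
  transitivity (lam p c ^ 3 * TT p ^ 2 * (pbe p ^ 2 * (sin t * sin t)) * (V * V)).
  - field. auto.
  - rewrite HV. replace (sin t * sin t) with (1 - cos t * cos t) by lra. ring.
Qed.

Lemma rel_quad_smooth : forall p c x, ps p = 0 -> PP p (Th p (TT p * x)) <> 0 ->
  (phi p c x - c) * gg p c x ^ 2 =
   - (lam p c * TT p ^ 2) * ((phi p c x - c) - lam p c * (pal p - pbe p))
                           * ((phi p c x - c) - lam p c * (pal p + pbe p)).
Proof.
  intros p c x Hs H. pose proof (rel_gen p c x H) as E. rewrite Hs, Rplus_0_r in E.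
  apply (Rmult_eq_reg_r (PP p (Th p (TT p * x)))); auto. rewrite E.
  unfold phi. rewrite comp_eP. ring.
Qed.

Lemma rel_quad_cusp : forall p c x, pal p = pbe p -> PP p (Th p (TT p * x)) <> 0 ->
  (phi p c x - c) * gg p c x ^ 2 =
   - (lam p c * TT p ^ 2) * ((phi p c x - c) - lam p c * (2 * pbe p))
                           * ((phi p c x - c) - lam p c * (- ps p)).
Proof.
  intros p c x Hab H. pose proof (rel_gen p c x H) as E. rewrite Hab in E.
  apply (Rmult_eq_reg_r (PP p (Th p (TT p * x)))); auto. rewrite E.
  unfold phi. rewrite comp_eP. ring.
Qed.

Lemma three_vals : forall p t, t = PI / 3 \/ t = PI / 2 \/ t = PI ->
  PP p (Th p (TT p * (XX p t / TT p))) <> 0.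
Proof.
  intros p t Ht. rewrite Th_at. unfold PP, Pf. pose proof (p_be p). pose proof (p_le p).
  destruct Ht as [ -> | [ -> | -> ] ]; [rewrite cos_PI3|rewrite cos_PI2|rewrite cos_PI]; lra.
Qed.

Lemma notransl_gen : forall p1 p2 c a1 b1 a2 b2, c <> 0 ->
  (forall x, PP p1 (Th p1 (TT p1 * x)) <> 0 ->
     (phi p1 c x - c) * gg p1 c x ^ 2 = - (lam p1 c * TT p1 ^ 2) * ((phi p1 c x - c) - a1) * ((phi p1 c x - c) - b1)) ->
  (forall x, PP p2 (Th p2 (TT p2 * x)) <> 0 ->
     (phi p2 c x - c) * gg p2 c x ^ 2 = - (lam p2 c * TT p2 ^ 2) * ((phi p2 c x - c) - a2) * ((phi p2 c x - c) - b2)) ->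
  translates (phi p1 c) (phi p2 c) ->
  lam p1 c * TT p1 ^ 2 = lam p2 c * TT p2 ^ 2 /\ a1 + b1 = a2 + b2 /\ a1 * b1 = a2 * b2.
Proof.
  intros p1 p2 c a1 b1 a2 b2 Hc R1 R2 [tau Ht].
  assert (Hy : forall t, t = PI / 3 \/ t = PI / 2 \/ t = PI ->
     let y := phi p1 c (XX p1 t / TT p1) - c in
     - (lam p1 c * TT p1 ^ 2) * (y - a1) * (y - b1) = - (lam p2 c * TT p2 ^ 2) * (y - a2) * (y - b2)).
  { intros t Ht3 y. pose proof (three_vals p1 t Ht3) as H1.
    destruct (transl_gg p1 p2 c tau _ Hc Ht H1) as [Eg H2].
    unfold y. rewrite <- (R1 _ H1). rewrite Eg, Ht. apply R2; auto. }
  pose proof (lam_neq0 p1 c Hc) as Hl. pose proof (TT_pos p1). pose proof (TT_pos p2).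
  pose proof (p_be p1). pose proof PI_RGT_0.
  assert (Hk : lam p1 c * TT p1 ^ 2 <> 0) by (apply Rmult_integral_contrapositive; split; auto; apply pow_nonzero; lra).
  assert (V := vandermonde (lam p1 c * TT p1 ^ 2) a1 b1 (lam p2 c * TT p2 ^ 2) a2 b2
     (phi p1 c (XX p1 (PI/3) / TT p1) - c) (phi p1 c (XX p1 (PI/2) / TT p1) - c)
     (phi p1 c (XX p1 PI / TT p1) - c)).
  rewrite !phi_at in V. unfold PP, Pf in V. rewrite cos_PI3, cos_PI2, cos_PI in V.
  destruct V as [V1 [V2 V3]].
  - intro E. apply Hl. apply (Rmult_eq_reg_r (pbe p1)); [|lra]. nra.
  - intro E. apply Hl. apply (Rmult_eq_reg_r (pbe p1)); [|lra]. nra.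
  - intro E. apply Hl. apply (Rmult_eq_reg_r (pbe p1)); [|lra]. nra.
  - pose proof (Hy (PI/3) ltac:(auto)) as E. simpl in E. rewrite phi_at in E. unfold PP, Pf in E.
    rewrite cos_PI3 in E. lra.
  - pose proof (Hy (PI/2) ltac:(auto)) as E. simpl in E. rewrite phi_at in E. unfold PP, Pf in E.
    rewrite cos_PI2 in E. lra.
  - pose proof (Hy PI ltac:(auto)) as E. simpl in E. rewrite phi_at in E. unfold PP, Pf in E.
    rewrite cos_PI in E. lra.
  - split; auto. rewrite <- V1 in V2, V3. split.
    + apply (Rmult_eq_reg_l (lam p1 c * TT p1 ^ 2)); auto.
    + apply (Rmult_eq_reg_l (lam p1 c * TT p1 ^ 2)); auto.
Qed.

Lemma evp_perZ : forall p e t k, evp p e (t + 2 * IZR k * PI) = evp p e t.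
Proof.
  intros p e t k. destruct (cos_2kPI k) as [C S].
  assert (Hc : cos (t + 2 * IZR k * PI) = cos t) by (rewrite cos_plus, C, S; ring).
  assert (Hs : sin (t + 2 * IZR k * PI) = sin t) by (rewrite sin_plus, C, S; ring).
  unfold evp. induction e; simpl; unfold Pf; rewrite ?Hc, ?Hs; auto; rewrite ?IHe1, ?IHe2; auto.
Qed.

Lemma gg_shift : forall p c y (k : Z),
  gg p c y = lam p c * TT p * evp p (Dx p (eP p)) (Th p (TT p * (y - IZR k))).
Proof.
  intros. unfold gg, comp. f_equal.
  replace (TT p * y) with (TT p * (y - IZR k) + IZR k * TT p) by ring.
  rewrite Th_perZ. apply evp_perZ.
Qed.

Lemma Dx_val : forall p u, pal p = pbe p -> cos u <> 1 ->
  evp p (Dx p (eP p)) u = sqrt (PP p u + ps p) * (sin u / (1 - cos u)).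
Proof.
  intros p u Hab Hc. unfold evp, Dx, einvw, eP, PP, Pf. simpl. rewrite Hab.
  pose proof (p_be p). unfold Pf.
  assert (1 - cos u <> 0) by (intro; apply Hc; lra).
  replace (pbe p - pbe p * cos u) with (pbe p * (1 - cos u)) by ring.
  field. split; auto. lra.
Qed.

Lemma ratio_pos : forall u, 0 < u < PI / 2 -> 1 / u < sin u / (1 - cos u).
Proof.
  intros u Hu. pose proof (sin_gt_0 u ltac:(lra) ltac:(lra)) as Hs.
  pose proof (sin_lt_x u ltac:(lra)) as Hsx.
  pose proof (cos_ge_0 u ltac:(lra) ltac:(lra)) as Hc.
  pose proof (sin2_cos2 u) as SC. unfold Rsqr in SC.
  assert (Hc1 : cos u < 1) by nra.
  assert (K1 : 1 - cos u <= sin u * sin u) by nra.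
  assert (K2 : sin u * sin u < u * sin u) by nra.
  apply (Rmult_lt_reg_r (u * (1 - cos u))); [nra|].
  replace (1 / u * (u * (1 - cos u))) with (1 - cos u) by (field; lra).
  replace (sin u / (1 - cos u) * (u * (1 - cos u))) with (u * sin u) by (field; lra). lra.
Qed.

Lemma ratio_neg : forall u, - (PI / 2) < u < 0 -> sin u / (1 - cos u) < 1 / u.
Proof.
  intros u Hu. pose proof (ratio_pos (- u) ltac:(lra)) as H.
  rewrite sin_neg, cos_neg in H.
  replace (- sin u / (1 - cos u)) with (- (sin u / (1 - cos u))) in H by (unfold Rdiv; ring).
  replace (1 / - u) with (- (1 / u)) in H by (field; lra). lra.
Qed.

Lemma cos_ne1_small : forall u, 0 < Rabs u < PI / 2 -> cos u <> 1.
Proof.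
  intros u Hu E. destruct (Rlt_le_dec 0 u).
  - rewrite Rabs_right in Hu by lra. pose proof (sin_gt_0 u ltac:(lra) ltac:(lra)).
    pose proof (sin2_cos2 u) as SC. unfold Rsqr in SC. rewrite E in SC. nra.
  - rewrite Rabs_left1 in Hu by lra. pose proof (sin_gt_0 (-u) ltac:(lra) ltac:(lra)).
    rewrite sin_neg in H. pose proof (sin2_cos2 u) as SC. unfold Rsqr in SC. rewrite E in SC. nra.
Qed.

Lemma sqrt_s_le : forall p u, sqrt (ps p) <= sqrt (PP p u + ps p).
Proof. intros. apply sqrt_le_1_alt. pose proof (PP_nonneg p u). lra. Qed.

Lemma nonint_between : forall (k : Z) y, IZR k < y < IZR k + 1 -> ~ isint y.
Proof.
  intros k y Hy [m ->]. destruct Hy as [H1 H2].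
  apply lt_IZR in H1. rewrite <- plus_IZR in H2. apply lt_IZR in H2. lia.
Qed.

Lemma blow_right : forall p (k : Z), pal p = pbe p -> 0 < ps p -> forall K,
  exists eta, 0 < eta < 1 /\ forall y, IZR k < y < IZR k + eta ->
    K < evp p (Dx p (eP p)) (Th p (TT p * (y - IZR k))).
Proof.
  intros p k Hab Hs K. pose proof PI_RGT_0. pose proof (TT_pos p) as HT.
  assert (Hsq : 0 < sqrt (ps p)) by (apply sqrt_lt_R0; auto).
  set (eps := Rmin (PI / 4) (sqrt (ps p) / (Rabs K + 1))).
  assert (He : 0 < eps).
  { unfold eps. apply Rmin_glb_lt; [lra|]. apply Rdiv_lt_0_compat; auto. pose proof (Rabs_pos K); lra. }
  assert (He1 : eps <= PI / 4) by apply Rmin_l.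
  assert (He2 : eps <= sqrt (ps p) / (Rabs K + 1)) by apply Rmin_r.
  exists (XX p eps / TT p). split.
  - pose proof (XX_strict p 0 eps He). pose proof (XX_strict p eps (2 * PI) ltac:(lra)).
    rewrite XX_0 in *. fold (TT p) in *. split.
    + apply Rdiv_lt_0_compat; lra.
    + apply (Rmult_lt_reg_r (TT p)); auto. unfold Rdiv. rewrite Rmult_assoc, Rinv_l; lra.
  - intros y Hy. set (u := Th p (TT p * (y - IZR k))).
    assert (Hu : 0 < u < eps).
    { unfold u. split.
      - rewrite <- (Th_0 p). apply Th_strict. apply Rmult_lt_0_compat; lra.
      - rewrite <- (Th_XX p eps). apply Th_strict.
        apply (Rmult_lt_reg_r (/ TT p)); [apply Rinv_0_lt_compat; auto|].
        replace (TT p * (y - IZR k) * / TT p) with (y - IZR k) by (field; lra).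
        unfold Rdiv in Hy. lra. }
    rewrite Dx_val; auto; [|apply cos_ne1_small; rewrite Rabs_right; lra].
    pose proof (ratio_pos u ltac:(lra)) as Hr.
    pose proof (sqrt_s_le p u) as Hq.
    assert (H1u : sqrt (ps p) / u >= Rabs K + 1).
    { apply Rle_ge. apply (Rmult_le_reg_r u); [lra|]. unfold Rdiv.
      rewrite Rmult_assoc, Rinv_l, Rmult_1_r by lra.
      assert (u * (Rabs K + 1) <= eps * (Rabs K + 1)) by (apply Rmult_le_compat_r; [pose proof (Rabs_pos K)|]; lra).
      assert (eps * (Rabs K + 1) <= sqrt (ps p)).
      { apply (Rmult_le_compat_r (Rabs K + 1)) in He2; [|pose proof (Rabs_pos K); lra].
        unfold Rdiv in He2. rewrite Rmult_assoc, Rinv_l, Rmult_1_r in He2; [lra|]. pose proof (Rabs_pos K); lra. }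
      lra. }
    assert (sqrt (ps p) * (1 / u) <= sqrt (PP p u + ps p) * (sin u / (1 - cos u))).
    { apply Rmult_le_compat; [lra| |lra|lra]. unfold Rdiv. rewrite Rmult_1_l. left; apply Rinv_0_lt_compat; lra. }
    unfold Rdiv in H1u. rewrite <- (Rmult_1_l (/ u)) in H1u.
    pose proof (Rle_abs K). unfold Rdiv in H0. lra.
Qed.

Lemma blow_left : forall p (k : Z), pal p = pbe p -> 0 < ps p -> forall K,
  exists eta, 0 < eta < 1 /\ forall y, IZR k - eta < y < IZR k ->
    evp p (Dx p (eP p)) (Th p (TT p * (y - IZR k))) < - K.
Proof.
  intros p k Hab Hs K. pose proof PI_RGT_0. pose proof (TT_pos p) as HT.
  assert (Hsq : 0 < sqrt (ps p)) by (apply sqrt_lt_R0; auto).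
  set (eps := Rmin (PI / 4) (sqrt (ps p) / (Rabs K + 1))).
  assert (He : 0 < eps).
  { unfold eps. apply Rmin_glb_lt; [lra|]. apply Rdiv_lt_0_compat; auto. pose proof (Rabs_pos K); lra. }
  assert (He1 : eps <= PI / 4) by apply Rmin_l.
  assert (He2 : eps <= sqrt (ps p) / (Rabs K + 1)) by apply Rmin_r.
  exists (- XX p (- eps) / TT p). split.
  - pose proof (XX_strict p (- eps) 0 ltac:(lra)). pose proof (XX_perZ p (- eps) 1) as E1.
    simpl in E1. replace (- eps + 2 * 1 * PI) with (2 * PI - eps) in E1 by ring.
    pose proof (XX_strict p 0 (2 * PI - eps) ltac:(lra)).
    rewrite XX_0 in *. fold (TT p) in *. split.
    + apply Rdiv_lt_0_compat; lra.
    + apply (Rmult_lt_reg_r (TT p)); auto. unfold Rdiv. rewrite Rmult_assoc, Rinv_l; lra.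
  - intros y Hy. set (u := Th p (TT p * (y - IZR k))).
    assert (Hu : - eps < u < 0).
    { unfold u. split.
      - rewrite <- (Th_XX p (- eps)). apply Th_strict.
        apply (Rmult_lt_reg_r (/ TT p)); [apply Rinv_0_lt_compat; auto|].
        replace (TT p * (y - IZR k) * / TT p) with (y - IZR k) by (field; lra).
        unfold Rdiv in Hy. lra.
      - rewrite <- (Th_0 p). apply Th_strict.
        assert (0 < TT p * (IZR k - y)) by (apply Rmult_lt_0_compat; lra). lra. }
    rewrite Dx_val; auto; [|apply cos_ne1_small; rewrite Rabs_left; lra].
    pose proof (ratio_neg u ltac:(lra)) as Hr.
    pose proof (sqrt_s_le p u) as Hq.
    assert (H1u : sqrt (ps p) / (- u) >= Rabs K + 1).
    { apply Rle_ge. apply (Rmult_le_reg_r (- u)); [lra|]. unfold Rdiv.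
      rewrite Rmult_assoc, Rinv_l, Rmult_1_r by lra.
      assert (- u * (Rabs K + 1) <= eps * (Rabs K + 1)) by (apply Rmult_le_compat_r; [pose proof (Rabs_pos K)|]; lra).
      assert (eps * (Rabs K + 1) <= sqrt (ps p)).
      { apply (Rmult_le_compat_r (Rabs K + 1)) in He2; [|pose proof (Rabs_pos K); lra].
        unfold Rdiv in He2. rewrite Rmult_assoc, Rinv_l, Rmult_1_r in He2; [lra|]. pose proof (Rabs_pos K); lra. }
      lra. }
    assert (HQ : sqrt (PP p u + ps p) * (sin u / (1 - cos u)) <= sqrt (ps p) * (1 / u)).
    { assert (1 / u < 0) by (unfold Rdiv; rewrite Rmult_1_l; apply Rinv_lt_0_compat; lra).
      assert (sqrt (PP p u + ps p) * (sin u / (1 - cos u)) <= sqrt (PP p u + ps p) * (1 / u))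
        by (apply Rmult_le_compat_l; lra).
      assert (sqrt (PP p u + ps p) * (1 / u) <= sqrt (ps p) * (1 / u)) by nra.
      lra. }
    replace (sqrt (ps p) * (1 / u)) with (- (sqrt (ps p) / (- u))) in HQ by (field; lra).
    pose proof (Rle_abs K). pose proof (Rle_abs (-K)). rewrite Rabs_Ropp in H1. lra.
Qed.

Definition clamp (lo hi t : R) : R := Rmax lo (Rmin t hi).
Lemma clamp_bounds : forall lo hi t, lo <= hi -> lo <= clamp lo hi t <= hi.
Proof.
  intros. unfold clamp. split; [apply Rmax_l|]. apply Rmax_lub; [auto|apply Rmin_r].
Qed.
Lemma clamp_id : forall lo hi t, lo < t < hi -> clamp lo hi t = t.
Proof.
  intros. unfold clamp. rewrite Rmin_left by lra. rewrite Rmax_right; lra.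
Qed.

Lemma sb1 : forall t, 0 < clamp (1/8) (3/8) t.
Proof. intros. pose proof (clamp_bounds (1/8) (3/8) t ltac:(lra)). lra. Qed.
Lemma sb2 : forall t, clamp (1/8) (3/8) t <= 1.
Proof. intros. pose proof (clamp_bounds (1/8) (3/8) t ltac:(lra)). lra. Qed.
Lemma sb3 : 0 <= 0.
Proof. lra. Qed.
Lemma sb4 : forall t, (0:R) = 0 \/ 1 = clamp (1/8) (3/8) t.
Proof. intros. left. reflexivity. Qed.
Lemma sb5 : forall t, 0 < 1 - clamp (1/8) (3/8) t + 0.
Proof. intros. pose proof (clamp_bounds (1/8) (3/8) t ltac:(lra)). lra. Qed.

Definition sprm (t : R) : prm := mkprm 1 (clamp (1/8) (3/8) t) 0 (sb1 t) (sb2 t) sb3 (sb4 t) (sb5 t).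

Lemma cb1 : 0 < 1/2. Proof. lra. Qed.
Lemma cb2 : 1/2 <= 1/2. Proof. lra. Qed.
Lemma cb3 : forall t, 0 <= clamp (1/4) (3/4) t.
Proof. intros. pose proof (clamp_bounds (1/4) (3/4) t ltac:(lra)). lra. Qed.
Lemma cb4 : forall t, clamp (1/4) (3/4) t = 0 \/ 1/2 = 1/2.
Proof. intros. right. reflexivity. Qed.
Lemma cb5 : forall t, 0 < 1/2 - 1/2 + clamp (1/4) (3/4) t.
Proof. intros. pose proof (clamp_bounds (1/4) (3/4) t ltac:(lra)). lra. Qed.

Definition cprm (t : R) : prm := mkprm (1/2) (1/2) (clamp (1/4) (3/4) t) cb1 cb2 (cb3 t) (cb4 t) (cb5 t).

Lemma smooth_ok : forall p c, c <> 0 -> ps p = 0 -> smooth_wave c (phi p c).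
Proof.
  intros p c Hc Hs. split; [apply tw|split; [|apply nonconst; auto]].
  exists (Dn p c). split; [reflexivity|].
  intros n x. apply tower. pose proof (PP_bounds p (Th p (TT p * x))). pose proof (p_pos p).
  lra.
Qed.

Lemma lam_prod_pos : forall p1 p2 c, c <> 0 -> 0 < lam p1 c * lam p2 c.
Proof.
  intros. unfold lam. pose proof (den_pos p1). pose proof (den_pos p2).
  replace (- c / den p1 * (- c / den p2)) with ((c * c) / (den p1 * den p2)) by (field; lra).
  apply Rdiv_lt_0_compat; [|nra]. assert (c * c > 0) by (apply Rsqr_pos_lt in H; unfold Rsqr in H; lra). lra.
Qed.

Lemma cusp_deriv_eq : forall p c (k : Z) y l, ~ isint y ->
  derivable_pt_lim (phi p c) y l ->
  l = lam p c * TT p * evp p (Dx p (eP p)) (Th p (TT p * (y - IZR k))).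
Proof.
  intros. rewrite <- gg_shift. apply (dl_unique (phi p c) y); auto.
  apply phi_deriv. apply noint_ok; auto.
Qed.

Lemma cusped_ok : forall p c, c <> 0 -> pal p = pbe p -> 0 < ps p -> cusped_wave c (phi p c).
Proof.
  intros p c Hc Hab Hs. pose proof (lam_neq0 p c Hc) as Hl. pose proof (TT_pos p) as HT.
  split; [apply tw|split; [|split]].
  - exists (Dn p c). split; [reflexivity|].
    intros n x Hx. apply tower. apply (phi_c_PP p c); auto.
  - exists 0. unfold phi. rewrite comp_eP, Rmult_0_r, Th_0. unfold PP, Pf. rewrite cos_0, Hab. ring.
  - intros x Hx. assert (Hp : PP p (Th p (TT p * x)) = 0).
    { unfold phi in Hx. rewrite comp_eP in Hx. apply (Rmult_eq_reg_l (lam p c)); auto. lra. }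
    destruct (cusp_int p x Hp) as [k ->].
    exists (1/2). split; [lra|split].
    + intros y Hy. exists (gg p c y). apply phi_deriv. apply noint_ok.
      intros [m ->]. destruct Hy as [H1 H2]. rewrite <- minus_IZR in *.
      destruct (Z.eq_dec (m - k) 0) as [E|E].
      * rewrite E in H1. rewrite Rabs_R0 in H1. lra.
      * destruct (Z_lt_le_dec (m - k) 0).
        -- assert (IZR (m - k) <= -1) by (apply IZR_le; lia). rewrite Rabs_left in H2; lra.
        -- assert (1 <= IZR (m - k)) by (apply IZR_le; lia). rewrite Rabs_right in H2; lra.
    + assert (HlT : lam p c * TT p <> 0) by (apply Rmult_integral_contrapositive; split; lra).
      destruct (Rlt_le_dec 0 (lam p c)) as [Hlp|Hln].
      * assert (HlTp : 0 < lam p c * TT p) by (apply Rmult_lt_0_compat; lra).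
        right. split.
        -- intro K. destruct (blow_left p k Hab Hs (- (K / (lam p c * TT p)))) as [eta [He Hb]].
           exists eta. split; [lra|]. intros y l Hy Hd.
           rewrite (cusp_deriv_eq p c k y l) by
             (auto; apply (nonint_between (k - 1)); rewrite minus_IZR; simpl; lra).
           specialize (Hb y Hy). rewrite Ropp_involutive in Hb.
           apply (Rmult_lt_compat_l (lam p c * TT p)) in Hb; auto.
           replace (lam p c * TT p * (K / (lam p c * TT p))) with K in Hb by (field; repeat split; auto; lra). lra.
        -- intro K. destruct (blow_right p k Hab Hs (K / (lam p c * TT p))) as [eta [He Hb]].
           exists eta. split; [lra|]. intros y l Hy Hd.
           rewrite (cusp_deriv_eq p c k y l) by (auto; apply (nonint_between k); lra).
           specialize (Hb y Hy).
           apply (Rmult_lt_compat_l (lam p c * TT p)) in Hb; auto.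
           replace (lam p c * TT p * (K / (lam p c * TT p))) with K in Hb by (field; repeat split; auto; lra). lra.
      * assert (HlTn : lam p c * TT p < 0).
        { assert (lam p c < 0) by lra. assert (0 < - lam p c * TT p) by (apply Rmult_lt_0_compat; lra). lra. }
        left. split.
        -- intro K. destruct (blow_left p k Hab Hs (- (K / (lam p c * TT p)))) as [eta [He Hb]].
           exists eta. split; [lra|]. intros y l Hy Hd.
           rewrite (cusp_deriv_eq p c k y l) by
             (auto; apply (nonint_between (k - 1)); rewrite minus_IZR; simpl; lra).
           specialize (Hb y Hy). rewrite Ropp_involutive in Hb.
           apply (Rmult_lt_compat_l (- (lam p c * TT p))) in Hb; [|lra].
           replace (- (lam p c * TT p) * (K / (lam p c * TT p))) with (- K) in Hb by (field; repeat split; auto; lra). lra.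
        -- intro K. destruct (blow_right p k Hab Hs (K / (lam p c * TT p))) as [eta [He Hb]].
           exists eta. split; [lra|]. intros y l Hy Hd.
           rewrite (cusp_deriv_eq p c k y l) by (auto; apply (nonint_between k); lra).
           specialize (Hb y Hy).
           apply (Rmult_lt_compat_l (- (lam p c * TT p))) in Hb; [|lra].
           replace (- (lam p c * TT p) * (K / (lam p c * TT p))) with (- K) in Hb by (field; repeat split; auto; lra). lra.
Qed.

Theorem theorem6p3 (c : R) (hc : c <> 0) :
  one_param_family (smooth_wave c) /\ one_param_family (cusped_wave c).
Proof.
  split.
  - exists (1/8), (3/8), (fun t => phi (sprm t) c). split; [lra|split].
    + intros t _. apply smooth_ok; auto.
    + intros t t' Ht Ht' Hne Htr.
      destruct (notransl_gen (sprm t) (sprm t') c _ _ _ _ hc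
        (fun x H => rel_quad_smooth (sprm t) c x eq_refl H)
        (fun x H => rel_quad_smooth (sprm t') c x eq_refl H) Htr) as [_ [S P]].
      simpl in S, P. rewrite !clamp_id in S, P by auto.
      pose proof (lam_neq0 (sprm t) c hc) as Hl.
      assert (El : lam (sprm t) c = lam (sprm t') c) by lra.
      rewrite <- El in P.
      assert (E2 : lam (sprm t) c * lam (sprm t) c * (t * t - t' * t') = 0) by lra.
      apply Rmult_integral in E2. destruct E2 as [E2|E2].
      * apply Rmult_integral in E2. destruct E2; contradiction.
      * apply Hne. nra.
  - exists (1/4), (3/4), (fun t => phi (cprm t) c). split; [lra|split].
    + intros t Ht. apply cusped_ok; auto. simpl. pose proof (cb5 t). lra.
    + intros t t' Ht Ht' Hne Htr.
      destruct (notransl_gen (cprm t) (cprm t') c _ _ _ _ hc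
        (fun x H => rel_quad_cusp (cprm t) c x eq_refl H)
        (fun x H => rel_quad_cusp (cprm t') c x eq_refl H) Htr) as [_ [S P]].
      simpl in S, P. rewrite !clamp_id in S, P by auto.
      pose proof (lam_neq0 (cprm t) c hc) as Hl.
      pose proof (lam_prod_pos (cprm t) (cprm t') c hc) as Hpp.
      set (l1 := lam (cprm t) c) in *. set (l2 := lam (cprm t') c) in *.
      assert (E : (l1 - l2) * (l2 + l1 * t) = 0) by nra.
      apply Rmult_integral in E. destruct E as [E|E].
      * assert (l1 = l2) by lra. subst l2. apply Hne.
        assert (l1 * l1 * (t - t') = 0) by nra.
        apply Rmult_integral in H0. destruct H0 as [H0|H0]; [apply Rmult_integral in H0; destruct H0; contradiction|lra].
      * assert (0 < (l2 + l1 * t) * l1) by nra. rewrite E in H. lra.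
Qed.
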